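(* Let $q\in(0,1)$ and let $\ell^1(h)$ be the $L^1$-algebra associated with the little $q$-Legendre polynomials $(R_n(x;q))_{n\in\mathbb{N}_0}$. Then the linear span of the idempotents of $\ell^1(h)$ is dense in $\ell^1(h)$.
   Context: For $q\in(0,1)$, the little $q$-Legendre polynomials are defined by $R_0(x;q)=1$, $R_1(x;q)=(x-b_0)/a_0$ and $R_1(x;q)R_n(x;q)=a_nR_{n+1}(x;q)+b_nR_n(x;q)+c_nR_{n-1}(x;q)$ for $n\ge1$, where $a_0=\frac{1}{q+1}$, $b_0=\frac{q}{q+1}$, and for $n\ge1$: $a_n=q^n\frac{(1+q)(1-q^{n+1})}{(1-q^{2n+1})(1+q^{n+1})}$, $c_n=q^n\frac{(1+q)(1-q^n)}{(1-q^{2n+1})(1+q^n)}$, $b_n=1-a_n-c_n$. One has linearization formulas $R_m(x;q)R_n(x;q)=\sum_{k=|m-n|}^{m+n}g(m,n;k)R_k(x;q)$ with $g(m,n;k)\ge0$ (and $\sum_k g(m,n;k)=1$). Let $h(n)=\frac{1}{q^n}\frac{1-q^{2n+1}}{1-q}$ (equivalently $h(n)=1/g(n,n;0)$). For $f:\mathbb{N}_0\to\mathbb{C}$ and $n\in\mathbb{N}_0$ let $T_nf(m)=\sum_{k=|m-n|}^{m+n}g(m,n;k)f(k)$. The space $\ell^1(h)=\{f:\mathbb{N}_0\to\mathbb{C}:\|f\|_1=\sum_k|f(k)|h(k)<\infty\}$ with the convolution $f\ast g(n)=\sum_{k=0}^\infty T_nf(k)g(k)h(k)$ and involution given by complex conjugation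 is a commutative Banach $\ast$-algebra with unit $\delta_0$ (the $L^1$-algebra). An idempotent is $f\in\ell^1(h)$ with $f\ast f=f$. *)

(* Defs.v *)
From Stdlib Require Import Reals Lra ClassicalEpsilon List.
From Coquelicot Require Import Coquelicot.
Open Scope R_scope.

Definition a_coef (q : R) (n : nat) : R :=
  match n with
  | O => 1 / (q + 1)
  | S _ => q ^ n * ((1 + q) * (1 - q ^ (n + 1)))
           / ((1 - q ^ (2 * n + 1)) * (1 + q ^ (n + 1)))
  end.

Definition c_coef (q : R) (n : nat) : R :=
  match n with
  | O => 0 (* not used *)
  | S _ => q ^ n * ((1 + q) * (1 - q ^ n))
           / ((1 - q ^ (2 * n + 1)) * (1 + q ^ n))
  end.

Definition b_coef (q : R) (n : nat) : R :=
  match n with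
  | O => q / (q + 1)
  | S _ => 1 - a_coef q n - c_coef q n
  end.

Definition R1 (q x : R) : R := (x - b_coef q 0) / a_coef q 0.

(* Rpair q x n = (R_n(x;q), R_{n+1}(x;q)), using
   R_1 R_n = a_n R_{n+1} + b_n R_n + c_n R_{n-1}  (n >= 1). *)
Fixpoint Rpair (q x : R) (n : nat) : R * R :=
  match n with
  | O => (1, R1 q x)
  | S n' => let (u, v) := Rpair q x n' in
            (v, ((R1 q x - b_coef q n) * v - c_coef q n * u) / a_coef q n)
  end.

Definition Rleg (q : R) (n : nat) (x : R) : R := fst (Rpair q x n).

Definition is_lin_coeff (q : R) (m n : nat) (c : nat -> R) : Prop :=
  (forall k, (m + n < k)%nat -> c k = 0) /\
  (forall x, Rleg q m x * Rleg q n x = sum_f_R0 (fun k => c k * Rleg q k x) (m + n)).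

Definition gcoef (q : R) (m n : nat) : nat -> R :=
  epsilon (inhabits (fun _ : nat => 0)) (is_lin_coeff q m n).

Definition hw (q : R) (n : nat) : R := (1 - q ^ (2 * n + 1)) / ((1 - q) * q ^ n).

Definition Tshift (q : R) (n : nat) (f : nat -> C) (m : nat) : C :=
  sum_n_m (fun k => Cmult (RtoC (gcoef q m n k)) (f k))
          (Nat.max m n - Nat.min m n) (m + n).

Definition CSeries (u : nat -> C) : C :=
  (Series (fun k => fst (u k)), Series (fun k => snd (u k))).

Definition in_l1 (q : R) (f : nat -> C) : Prop :=
  ex_series (fun k => Cmod (f k) * hw q k).

Definition l1norm (q : R) (f : nat -> C) : R :=
  Series (fun k => Cmod (f k) * hw q k).

Definition conv (q : R) (f g : nat -> C) (n : nat) : C :=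
  CSeries (fun k => Cmult (Cmult (Tshift q n f k) (g k)) (RtoC (hw q k))).

Definition idempotent (q : R) (f : nat -> C) : Prop :=
  in_l1 q f /\ (forall n, conv q f f n = f n).

Definition lincomb (l : list (C * (nat -> C))) (n : nat) : C :=
  fold_right (fun p acc => Cplus (Cmult (fst p) (snd p n)) acc) (RtoC 0) l.

(* Main.v *)
Require Import Defs.
From Stdlib Require Import Reals Lra Lia List ClassicalEpsilon.
From Coquelicot Require Import Coquelicot.
Open Scope R_scope.

Ltac nz := repeat split; try match goal with |- ?a <> ?b => let H := fresh in intro H; nra end.

Section PartA.
Variable q : R.
Hypothesis hq0 : 0 < q.
Hypothesis hq1 : q < 1.

Fixpoint Poch (a : R) (r : nat) : R :=
  match r with O => 1 | S k => Poch a k * (1 - a * q ^ k) end.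

Lemma Poch_front a r : Poch a (S r) = (1 - a) * Poch (a * q) r.
Proof.
  induction r as [|r IH]; simpl.
  - ring.
  - simpl in IH. rewrite IH. ring.
Qed.

Lemma Poch_zero a r s : (s < r)%nat -> a * q ^ s = 1 -> Poch a r = 0.
Proof.
  induction r as [|r IH]; intros Hs Ha; [lia|].
  simpl. destruct (Nat.eq_dec s r) as [->|Hne].
  - rewrite Ha. ring.
  - rewrite IH by (lia || exact Ha). ring.
Qed.

Lemma pow_pos' k : 0 < q ^ k.
Proof. apply pow_lt; lra. Qed.

Lemma pow_le1 k : q ^ k <= 1.
Proof.
  induction k; simpl. lra.
  pose proof (pow_pos' k). nra.
Qed.

Lemma pow_lt1 k : (0 < k)%nat -> q ^ k < 1.
Proof.
  intros Hk. destruct k; [lia|]. simpl.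
  pose proof (pow_le1 k). pose proof (pow_pos' k). nra.
Qed.

Lemma Poch_q_pos r : 0 < Poch q r.
Proof.
  induction r; simpl. lra.
  apply Rmult_lt_0_compat; auto.
  pose proof (pow_lt1 (S r)). simpl in H.
  assert (q * q ^ r < 1) by (apply H; lia). lra.
Qed.

Definition Cc (u : R) (r : nat) : R :=
  q ^ r * Poch (/ u) r * Poch (q * u) r / (Poch q r) ^ 2.

Lemma Cc_S u r : u <> 0 ->
  Cc u (S r) = Cc u r * (q * (1 - q ^ r / u) * (1 - u * q ^ (S r)) / (1 - q ^ (S r)) ^ 2).
Proof.
  intros Hu. unfold Cc. simpl.
  pose proof (Poch_q_pos r).
  assert (1 - q * q ^ r <> 0).
  { pose proof (pow_lt1 (S r)). simpl in H0. assert (q * q^r < 1) by (apply H0; lia). lra. }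
  field. repeat split; try lra; auto.
Qed.

Lemma Cc_vanish n r : (n < r)%nat -> Cc (q ^ n) r = 0.
Proof.
  intros H. unfold Cc. rewrite (Poch_zero (/ q ^ n) r n H).
  - unfold Rdiv. ring.
  - field. apply Rgt_not_eq, pow_pos'.
Qed.

End PartA.

Section PartA2.
Variable q : R.
Hypothesis hq0 : 0 < q.
Hypothesis hq1 : q < 1.

Lemma Poch_SS a k : Poch q a (S (S k)) = (1 - a) * Poch q (a * q) k * (1 - a * q * q ^ k).
Proof. rewrite Poch_front. simpl. ring. Qed.

Lemma Poch_ext a b r : a = b -> Poch q a r = Poch q b r.
Proof. intros ->; reflexivity. Qed.

Definition au (u : R) := u * (1 + q) * (1 - q * u) / ((1 - q * u ^ 2) * (1 + q * u)).
Definition cu (u : R) := u * (1 + q) * (1 - u) / ((1 - q * u ^ 2) * (1 + u)).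
Definition shiftc (c : nat -> R) (r : nat) : R := match r with O => 0 | S r' => c r' end.

Lemma coef_id u r : 0 < u -> q * u ^ 2 < 1 ->
  au u * Cc q (q * u) r - (au u + cu u) * Cc q u r + (1 + q) * shiftc (Cc q u) r
  + cu u * Cc q (u / q) r = 0.
Proof.
  intros Hu Hqu.
  assert (Hq1' : 1 - q <> 0) by lra.
  assert (Hqu2 : 1 - q * u ^ 2 <> 0) by lra.
  assert (H1qu : 1 + q * u <> 0) by nra.
  assert (H1u : 1 + u <> 0) by lra.
  destruct r as [|[|k]].
  - unfold Cc; simpl. unfold au, cu. field. split; auto.
  - unfold Cc, au, cu; simpl. field. repeat split; try lra; auto.
  - cbn [shiftc]. unfold Cc.
    assert (HQ : 0 < Poch q q k) by (apply Poch_q_pos; auto).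
    pose proof (pow_lt1 q hq0 hq1 (S k) ltac:(lia)) as Hk1.
    pose proof (pow_lt1 q hq0 hq1 (S (S k)) ltac:(lia)) as Hk2.
    simpl in Hk1, Hk2.
    set (X := Poch q (/ u * q) k).
    set (Y := Poch q (q * u * q) k).
    set (Qk := Poch q q k).
    set (v := q ^ k).
    assert (Hv : q ^ S k = q * v) by reflexivity.
    assert (Hv2 : q ^ S (S k) = q * (q * v)) by reflexivity.
    assert (E1 : Poch q (/ u) (S (S k)) = (1 - / u) * X * (1 - / u * q * v)) by (rewrite Poch_SS; reflexivity).
    assert (E2 : Poch q (/ (q * u)) (S (S k)) = (1 - / (q * u)) * (1 - / u) * X).
    { rewrite Poch_front, Poch_front.
      rewrite (Poch_ext (/ (q * u) * q * q) (/ u * q)) by (field; split; lra).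
      fold X. field. split; lra. }
    assert (E3 : Poch q (/ (u / q)) (S (S k)) = X * (1 - / u * q * v) * (1 - / u * q * (q * v))).
    { rewrite (Poch_ext (/ (u / q)) (/ u * q)) by (field; split; lra).
      simpl. fold v. unfold X. ring. }
    assert (E4 : Poch q (/ u) (S k) = (1 - / u) * X) by (rewrite Poch_front; reflexivity).
    assert (F1 : Poch q (q * u) (S (S k)) = (1 - q * u) * Y * (1 - q * u * q * v)) by (rewrite Poch_SS; reflexivity).
    assert (F2 : Poch q (q * (q * u)) (S (S k)) = Y * (1 - q * u * q * v) * (1 - q * u * q * (q * v))).
    { rewrite (Poch_ext (q * (q * u)) (q * u * q)) by ring.
      simpl. fold v. unfold Y. ring. }
    assert (F3 : Poch q (q * (u / q)) (S (S k)) = (1 - u) * (1 - u * q) * Y).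
    { rewrite (Poch_ext (q * (u / q)) u) by (field; lra).
      rewrite Poch_front, Poch_front.
      rewrite (Poch_ext (u * q * q) (q * u * q)) by ring. unfold Y. ring. }
    assert (F4 : Poch q (q * u) (S k) = (1 - q * u) * Y) by (rewrite Poch_front; reflexivity).
    assert (G1 : Poch q q (S (S k)) = Qk * (1 - q * v) * (1 - q * (q * v))) by (simpl; fold v; unfold Qk; ring).
    assert (G2 : Poch q q (S k) = Qk * (1 - q * v)) by (simpl; fold v; unfold Qk; ring).
    rewrite E1, E2, E3, E4, F1, F2, F3, F4, G1, G2, Hv, Hv2.
    assert (0 < v) by (apply pow_pos'; auto).
    assert (q * v < 1) by (rewrite <- Hv; exact Hk1).
    assert (q * (q * v) < 1) by (rewrite <- Hv2; exact Hk2).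
    unfold au, cu. field.
    repeat split; try lra. unfold Qk. apply Rgt_not_eq. apply Poch_q_pos; auto.
Qed.
End PartA2.

Definition ev (c : nat -> R) (N : nat) (t : R) : R := sum_f_R0 (fun r => c r * t ^ r) N.

Lemma ev_ext c d N t : (forall r, c r = d r) -> ev c N t = ev d N t.
Proof. intros H. unfold ev. apply sum_eq. intros; rewrite H; auto. Qed.

Lemma ev_plus c d N t : ev c N t + ev d N t = ev (fun r => c r + d r) N t.
Proof. unfold ev. rewrite <- plus_sum. apply sum_eq; intros; ring. Qed.

Lemma ev_scal k c N t : k * ev c N t = ev (fun r => k * c r) N t.
Proof. unfold ev. rewrite scal_sum. apply sum_eq; intros; ring. Qed.

Lemma ev_minus c d N t : ev c N t - ev d N t = ev (fun r => c r - d r) N t.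
Proof.
  replace (ev c N t - ev d N t) with (ev c N t + (-1) * ev d N t) by ring.
  rewrite ev_scal, ev_plus. apply ev_ext; intros; ring.
Qed.

Lemma ev_zero c N t : (forall r, c r = 0) -> ev c N t = 0.
Proof.
  intros H. unfold ev. induction N; simpl. rewrite H; ring.
  rewrite IHN, H. ring.
Qed.

Lemma ev_extend c N t : (forall r, (N < r)%nat -> c r = 0) ->
  forall M, (N <= M)%nat -> ev c M t = ev c N t.
Proof.
  intros H M HM. induction HM. reflexivity.
  unfold ev in *. simpl. rewrite IHHM, H by lia. ring.
Qed.

Lemma ev_shift c N t : t * ev c N t = ev (shiftc c) (S N) t.
Proof.
  unfold ev. induction N.
  - simpl. ring.
  - rewrite tech5, Rmult_plus_distr_l, IHN. rewrite (tech5 _ (S N)). simpl. ring.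
Qed.

Lemma ev_scale c N k t : ev c N (k * t) = ev (fun r => c r * k ^ r) N t.
Proof. unfold ev. apply sum_eq; intros. rewrite Rpow_mult_distr. ring. Qed.

Section PartA3.
Variable q : R.
Hypothesis hq0 : 0 < q.
Hypothesis hq1 : q < 1.

Definition P (n : nat) (t : R) : R := ev (Cc q (q ^ n)) (S n) t.

Lemma P_extend n M t : (S n <= M)%nat -> ev (Cc q (q ^ n)) M t = P n t.
Proof.
  intros H. unfold P. apply ev_extend; auto.
  intros r Hr. apply Cc_vanish; auto; lia.
Qed.

Lemma a_coef_S n : a_coef q (S n) = au q (q ^ S n).
Proof.
  set (u := q ^ S n).
  assert (Hu : 0 < u) by (apply pow_pos'; auto).
  assert (Hu1 : u < 1) by (apply pow_lt1; auto; lia).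
  unfold a_coef, au. fold u.
  replace (q ^ (S n + 1)) with (q * u) by (unfold u; rewrite pow_add; simpl; ring).
  replace (q ^ (2 * S n + 1)) with (q * u ^ 2) by
    (unfold u; replace (2 * S n + 1)%nat with (S n + S n + 1)%nat by lia; rewrite !pow_add; simpl; ring).
  assert (q * u < 1) by nra. assert (q * u ^ 2 < 1) by nra.
  field. split; nra.
Qed.

Lemma c_coef_S n : c_coef q (S n) = cu q (q ^ S n).
Proof.
  set (u := q ^ S n).
  assert (Hu : 0 < u) by (apply pow_pos'; auto).
  assert (Hu1 : u < 1) by (apply pow_lt1; auto; lia).
  unfold c_coef, cu. fold u.
  replace (q ^ (2 * S n + 1)) with (q * u ^ 2) by
    (unfold u; replace (2 * S n + 1)%nat with (S n + S n + 1)%nat by lia; rewrite !pow_add; simpl; ring).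
  assert (q * u ^ 2 < 1) by nra.
  field. split; nra.
Qed.

Lemma P_rec n t :
  a_coef q (S n) * P (S (S n)) t =
  (1 - (1 + q) * t - b_coef q (S n)) * P (S n) t - c_coef q (S n) * P n t.
Proof.
  unfold b_coef. rewrite a_coef_S, c_coef_S.
  set (u := q ^ S n).
  assert (Hu : 0 < u) by (apply pow_pos'; auto).
  assert (Hu1 : u < 1) by (apply pow_lt1; auto; lia).
  set (N := S (S (S n))).
  assert (E1 : P (S (S n)) t = ev (Cc q (q * u)) N t) by reflexivity.
  assert (E2 : P (S n) t = ev (Cc q u) N t) by (symmetry; apply P_extend; unfold N; lia).
  assert (E3 : t * P (S n) t = ev (shiftc (Cc q u)) N t) by (unfold P; rewrite ev_shift; reflexivity).
  assert (E4 : P n t = ev (Cc q (u / q)) N t).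
  { rewrite <- (P_extend n N) by (unfold N; lia).
    replace (u / q) with (q ^ n) by (unfold u; simpl; field; lra). reflexivity. }
  apply Rminus_diag_uniq.
  replace ((1 - (1 + q) * t - (1 - au q u - cu q u)) * P (S n) t - cu q u * P n t)
    with ((au q u + cu q u) * P (S n) t - (1 + q) * (t * P (S n) t) - cu q u * P n t) by ring.
  rewrite E3, E1, E2, E4.
  rewrite !ev_scal, !ev_minus.
  apply ev_zero. intros r.
  pose proof (coef_id q hq0 hq1 u r Hu ltac:(nra)). lra.
Qed.

Definition lam (n : nat) : R := (1 - q ^ n) * (1 - q ^ (S n)) / q ^ n.

Lemma P_qdiff n t : lam n * t * P n t =
  (q * t - 1) * (P n (q * t) - P n t) - (t - 1) * (P n t - P n (t / q)).
Proof.
  set (u := q ^ n).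
  assert (Hu : 0 < u) by (apply pow_pos'; auto).
  set (c := Cc q u).
  set (N := S (S n)).
  assert (Hc : forall r, (S n < r)%nat -> c r = 0) by (intros; apply Cc_vanish; auto; lia).
  assert (E0 : P n t = ev c N t) by (symmetry; apply P_extend; unfold N; lia).
  assert (E1 : t * P n t = ev (shiftc c) N t) by (unfold P; rewrite ev_shift; reflexivity).
  assert (E2 : P n (q * t) - P n t = ev (fun r => c r * q ^ r - c r) N t).
  { rewrite E0. unfold P. fold u c. rewrite <- (ev_extend c (S n) _ Hc N) by (unfold N; lia).
    rewrite ev_scale, ev_minus. reflexivity. }
  assert (E3 : P n t - P n (t / q) = ev (fun r => c r - c r * (/ q) ^ r) N t).
  { rewrite E0. unfold P. fold u c. rewrite <- (ev_extend c (S n) _ Hc N) by (unfold N; lia).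
    unfold Rdiv. rewrite Rmult_comm, ev_scale, ev_minus. reflexivity. }
  assert (E2' : t * (P n (q * t) - P n t) = ev (shiftc (fun r => c r * q ^ r - c r)) (S N) t)
    by (rewrite E2, ev_shift; reflexivity).
  assert (E3' : t * (P n t - P n (t / q)) = ev (shiftc (fun r => c r - c r * (/ q) ^ r)) (S N) t)
    by (rewrite E3, ev_shift; reflexivity).
  assert (E1' : t * P n t = ev (shiftc c) (S N) t).
  { rewrite E1. symmetry. apply ev_extend; [|lia]. intros r Hr. destruct r; [lia|]. simpl. apply Hc. unfold N in Hr; lia. }
  assert (E2'' : P n (q * t) - P n t = ev (fun r => c r * q ^ r - c r) (S N) t).
  { rewrite E2. symmetry. apply ev_extend; [|lia]. intros r Hr. rewrite Hc by (unfold N in Hr; lia). ring. }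
  assert (E3'' : P n t - P n (t / q) = ev (fun r => c r - c r * (/ q) ^ r) (S N) t).
  { rewrite E3. symmetry. apply ev_extend; [|lia]. intros r Hr. rewrite Hc by (unfold N in Hr; lia). ring. }
  replace ((q * t - 1) * (P n (q * t) - P n t) - (t - 1) * (P n t - P n (t / q)))
    with (q * (t * (P n (q * t) - P n t)) - (P n (q * t) - P n t)
          - (t * (P n t - P n (t / q))) + (P n t - P n (t / q))) by ring.
  replace (lam n * t * P n t) with (lam n * (t * P n t)) by ring.
  rewrite E1', E2', E3', E2'', E3''.
  apply Rminus_diag_uniq.
  rewrite !ev_scal, !ev_minus, !ev_plus, !ev_minus.
  apply ev_zero. intros r. destruct r as [|k].
  - simpl. ring.
  - simpl shiftc. unfold c. rewrite Cc_S by lra.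
    unfold lam. fold u.
    assert (0 < q ^ k) by (apply pow_pos'; auto).
    assert (q ^ S k < 1) by (apply pow_lt1; auto; lia).
    rewrite <- Rinv_pow by lra. rewrite <- Rinv_pow by lra.
    simpl. simpl in H0. change (q ^ n) with u. field. repeat split; try lra.
Qed.

End PartA3.


Section PartB.
Variable q : R.
Hypothesis hq0 : 0 < q.
Hypothesis hq1 : q < 1.

Lemma P0 t : P q 0 t = 1.
Proof.
  unfold P, ev, Cc. simpl. rewrite Rinv_1. field. lra.
Qed.

Lemma P1 t : P q 1 t = 1 - (1 + q) * t.
Proof.
  unfold P, ev, Cc. simpl. field. nz.
Qed.

Lemma a_pos n : 0 < a_coef q n.
Proof.
  destruct n.
  - simpl. apply Rdiv_lt_0_compat; lra.
  - rewrite a_coef_S by auto. unfold au.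
    set (u := q ^ S n).
    assert (0 < u) by (apply pow_pos'; auto).
    assert (u < 1) by (apply pow_lt1; auto; lia).
    apply Rdiv_lt_0_compat.
    + apply Rmult_lt_0_compat; [nra|nra].
    + apply Rmult_lt_0_compat; nra.
Qed.

Lemma Rpair_P x n : Rpair q x n = (P q n (1 - x), P q (S n) (1 - x)).
Proof.
  induction n.
  - simpl. rewrite P0, P1. unfold Defs.R1. f_equal. simpl. field. lra.
  - assert (E : Rpair q x (S n) = let (u, v) := Rpair q x n in
        (v, ((Defs.R1 q x - b_coef q (S n)) * v - c_coef q (S n) * u) / a_coef q (S n))) by reflexivity.
    rewrite E, IHn. f_equal.
    pose proof (P_rec q hq0 hq1 n (1 - x)) as H.
    pose proof (a_pos (S n)).
    assert (Defs.R1 q x = 1 - (1 + q) * (1 - x)) by (unfold Defs.R1; simpl; field; lra).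
    rewrite H1. apply (Rmult_eq_reg_l (a_coef q (S n))); [|lra].
    rewrite H. field. lra.
Qed.

Lemma Rleg_P n x : Rleg q n x = P q n (1 - x).
Proof. unfold Rleg. rewrite Rpair_P. reflexivity. Qed.

Lemma R1_eq x : Defs.R1 q x = 1 - (1 + q) * (1 - x).
Proof. unfold Defs.R1; simpl; field; lra. Qed.

Lemma P_rec' n t : (1 <= n)%nat ->
  (1 - (1 + q) * t) * P q n t =
  a_coef q n * P q (S n) t + b_coef q n * P q n t + c_coef q n * P q (pred n) t.
Proof.
  intros Hn. destruct n; [lia|]. simpl pred.
  rewrite (P_rec q hq0 hq1 n t). ring.
Qed.

Lemma pow_le_one t n : 0 <= t <= 1 -> 0 <= t ^ n <= 1.
Proof.
  intros Ht. induction n; simpl; [lra|]. nra.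
Qed.

Lemma term_bound (c : nat -> R) r t : 0 <= t <= 1 -> Rabs (c r * t ^ r) <= Rabs (c r) * 1 ^ r.
Proof.
  intros Ht. rewrite Rabs_mult, pow1. pose proof (pow_le_one t r Ht).
  rewrite (Rabs_right (t ^ r)) by lra. pose proof (Rabs_pos (c r)). nra.
Qed.

Lemma ev_bound c N t : 0 <= t <= 1 -> Rabs (ev c N t) <= ev (fun r => Rabs (c r)) N 1.
Proof.
  intros Ht. unfold ev. induction N.
  - apply term_bound; auto.
  - rewrite !tech5. eapply Rle_trans; [apply Rabs_triang|]. apply Rplus_le_compat; auto.
    apply term_bound; auto.
Qed.

Lemma pow_lip t s n : 0 <= t <= 1 -> 0 <= s <= 1 -> Rabs (t ^ n - s ^ n) <= INR n * Rabs (t - s).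
Proof.
  intros Ht Hs. induction n.
  - simpl. rewrite Rminus_diag, Rabs_R0. lra.
  - replace (t ^ S n - s ^ S n) with (t * (t ^ n - s ^ n) + s ^ n * (t - s)) by (simpl; ring).
    eapply Rle_trans; [apply Rabs_triang|]. rewrite !Rabs_mult.
    pose proof (pow_le_one s n Hs). rewrite (Rabs_right (s ^ n)) by lra.
    rewrite (Rabs_right t) by lra. rewrite S_INR.
    pose proof (Rabs_pos (t - s)). pose proof (Rabs_pos (t ^ n - s ^ n)). nra.
Qed.

Lemma ev_lip c N t s : 0 <= t <= 1 -> 0 <= s <= 1 ->
  Rabs (ev c N t - ev c N s) <= ev (fun r => Rabs (c r) * INR r) N 1 * Rabs (t - s).
Proof.
  intros Ht Hs. unfold ev. induction N.
  - simpl. replace (c 0%nat * 1 - c 0%nat * 1) with 0 by ring. rewrite Rabs_R0. lra.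
  - rewrite !tech5.
    match goal with |- Rabs (?A + ?a - (?B + ?b)) <= _ => replace (A + a - (B + b)) with ((A - B) + (a - b)) by ring end.
    eapply Rle_trans; [apply Rabs_triang|].
    rewrite Rmult_plus_distr_r. apply Rplus_le_compat; auto.
    replace (c (S N) * t ^ S N - c (S N) * s ^ S N) with (c (S N) * (t ^ S N - s ^ S N)) by ring.
    rewrite Rabs_mult, pow1. pose proof (pow_lip t s (S N) Ht Hs).
    pose proof (Rabs_pos (c (S N))). nra.
Qed.

Definition Bn (n : nat) : R := ev (fun r => Rabs (Cc q (q ^ n) r)) (S n) 1.
Definition Ln (n : nat) : R := ev (fun r => Rabs (Cc q (q ^ n) r) * INR r) (S n) 1.

Lemma P_bound n t : 0 <= t <= 1 -> Rabs (P q n t) <= Bn n.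
Proof. intros; apply ev_bound; auto. Qed.

Lemma P_lip n t s : 0 <= t <= 1 -> 0 <= s <= 1 -> Rabs (P q n t - P q n s) <= Ln n * Rabs (t - s).
Proof. intros; apply ev_lip; auto. Qed.

Lemma Bn_nonneg n : 0 <= Bn n.
Proof. eapply Rle_trans; [apply Rabs_pos|]. apply (P_bound n 0). lra. Qed.

Lemma Ln_nonneg n : 0 <= Ln n.
Proof.
  unfold Ln, ev. apply cond_pos_sum. intros. rewrite pow1.
  pose proof (Rabs_pos (Cc q (q ^ n) n0)). pose proof (pos_INR n0). nra.
Qed.

End PartB.


Lemma ser_lim a : ex_series a -> is_lim_seq (fun N => sum_f_R0 a N) (Series a).
Proof.
  intros H. apply Series_correct in H.
  eapply is_lim_seq_ext; [|exact H]. intros. apply sum_n_Reals.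
Qed.

Lemma lim_of_sums a (l : R) : is_lim_seq (fun N => sum_f_R0 a N) l -> is_series a l.
Proof.
  intros H. apply (is_lim_seq_ext _ (sum_n a)) in H.
  exact H. intros; simpl. rewrite sum_n_Reals. reflexivity.
Qed.

Lemma ser_lin2 a b f1 f2 : ex_series f1 -> ex_series f2 ->
  Series (fun j => a * f1 j + b * f2 j) = a * Series f1 + b * Series f2.
Proof.
  intros H1 H2. rewrite Series_plus.
  - rewrite !Series_scal_l. reflexivity.
  - apply (ex_series_scal_l a f1 H1).
  - apply (ex_series_scal_l b f2 H2).
Qed.

Lemma ex_lin2 a b f1 f2 : ex_series f1 -> ex_series f2 ->
  ex_series (fun j => a * f1 j + b * f2 j).
Proof.
  intros H1 H2. apply (ex_series_plus (fun j => a * f1 j) (fun j => b * f2 j)).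
  apply (ex_series_scal_l a f1 H1). apply (ex_series_scal_l b f2 H2).
Qed.

Lemma ser_lin3 a b c f1 f2 f3 : ex_series f1 -> ex_series f2 -> ex_series f3 ->
  Series (fun j => a * f1 j + b * f2 j + c * f3 j) = a * Series f1 + b * Series f2 + c * Series f3.
Proof.
  intros H1 H2 H3.
  rewrite (Series_ext _ (fun j => 1 * (a * f1 j + b * f2 j) + c * f3 j)) by (intros; ring).
  rewrite ser_lin2, ser_lin2; auto. ring. apply ex_lin2; auto.
Qed.

Lemma Rabs_sub_le a b : Rabs (a - b) <= Rabs a + Rabs b.
Proof. unfold Rminus. eapply Rle_trans; [apply Rabs_triang|]. rewrite Rabs_Ropp. lra. Qed.

Lemma abs_bounds x : - Rabs x <= x <= Rabs x.
Proof. destruct (Rcase_abs x); [rewrite Rabs_left|rewrite Rabs_right]; lra. Qed.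

Lemma lim_zero_geom q s (l : R) c K : 0 < q < 1 -> is_lim_seq s l ->
  (forall J, Rabs (c * s J) <= K * q ^ J) -> c * l = 0.
Proof.
  intros Hq Hs HB.
  assert (H1 : is_lim_seq (fun J => c * s J) (c * l)) by (apply (is_lim_seq_scal_l s c l Hs)).
  assert (Hg : is_lim_seq (fun J => K * q ^ J) 0).
  { replace (Finite 0) with (Rbar_mult K 0) by (simpl; f_equal; ring).
    apply is_lim_seq_scal_l, is_lim_seq_geom. rewrite Rabs_right; lra. }
  assert (Hg' : is_lim_seq (fun J => - K * q ^ J) 0).
  { replace (Finite 0) with (Rbar_mult (- K) 0) by (simpl; f_equal; ring).
    apply is_lim_seq_scal_l, is_lim_seq_geom. rewrite Rabs_right; lra. }
  assert (H2 : is_lim_seq (fun J => c * s J) 0).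
  { apply (is_lim_seq_le_le (fun J => - K * q ^ J) _ (fun J => K * q ^ J)); auto.
    intros J. pose proof (HB J). pose proof (abs_bounds (c * s J)). lra. }
  apply is_lim_seq_unique in H1. apply is_lim_seq_unique in H2.
  rewrite H1 in H2. injection H2. auto.
Qed.

Lemma ex_series_bnd q f K : 0 < q < 1 -> (forall j, Rabs (f j) <= K * q ^ j) -> ex_series f.
Proof.
  intros Hq H. apply (ex_series_le f (fun j => K * q ^ j)).
  - intros; apply H.
  - apply (ex_series_scal_l K (fun j => q ^ j)). apply ex_series_geom. rewrite Rabs_right; lra.
Qed.


Fixpoint psum (f : nat -> R) (J : nat) : R :=
  match J with O => 0 | S k => psum f k + f k end.

Section Orth.
Variable q : R.
Hypothesis hq0 : 0 < q.
Hypothesis hq1 : q < 1.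

Definition w (j : nat) : R := (1 - q) * q ^ j.
Definition y (n j : nat) : R := P q n (q ^ j).
Definition G (n j : nat) : R := (q ^ S j - 1) * (y n (S j) - y n j).

Lemma qj_range j : 0 <= q ^ j <= 1.
Proof. split. apply pow_le; lra. apply pow_le1; auto. Qed.

Lemma y_bound n j : Rabs (y n j) <= Bn q n.
Proof. apply P_bound. apply qj_range. Qed.

Lemma w_pos j : 0 < w j.
Proof. unfold w. apply Rmult_lt_0_compat; [lra|apply pow_pos'; auto]. Qed.

Lemma y_diff n j : Rabs (y n (S j) - y n j) <= Ln q n * q ^ j.
Proof.
  unfold y. eapply Rle_trans; [apply P_lip; apply qj_range|].
  apply Rmult_le_compat_l; [apply Ln_nonneg|].
  simpl. rewrite Rabs_left1. 2: { pose proof (pow_pos' q hq0 j). nra. }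
  pose proof (pow_pos' q hq0 j). nra.
Qed.

Lemma G_bound n j : Rabs (G n j) <= Ln q n * q ^ j.
Proof.
  unfold G. rewrite Rabs_mult.
  assert (Rabs (q ^ S j - 1) <= 1).
  { pose proof (qj_range (S j)). rewrite Rabs_left1; lra. }
  pose proof (y_diff n j). pose proof (Rabs_pos (y n (S j) - y n j)).
  pose proof (Rabs_pos (q ^ S j - 1)). nra.
Qed.

Lemma PW n j : lam q n * (w j * y n j) =
  (1 - q) * (G n j - match j with O => 0 | S j' => G n j' end).
Proof.
  pose proof (P_qdiff q hq0 hq1 n (q ^ j)) as H.
  unfold w, G, y. destruct j as [|j'].
  - simpl in H |- *.
    replace (lam q n * ((1 - q) * 1 * P q n 1)) with ((1 - q) * (lam q n * 1 * P q n 1)) by ring.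
    rewrite H. simpl. ring.
  - replace (q ^ S j' / q) with (q ^ j') in H by (simpl; field; lra).
    replace (lam q n * ((1 - q) * q ^ S j' * P q n (q ^ S j')))
      with ((1 - q) * (lam q n * q ^ S j' * P q n (q ^ S j'))) by ring.
    rewrite H. simpl. ring.
Qed.

Lemma SBP m n J : lam q n * sum_f_R0 (fun j => w j * y m j * y n j) J =
  (1 - q) * (y m J * G n J - psum (fun j => G n j * (y m (S j) - y m j)) J).
Proof.
  induction J.
  - simpl. pose proof (PW n 0). simpl in H.
    replace (lam q n * (w 0 * y m 0 * y n 0)) with (y m 0 * (lam q n * (w 0 * y n 0))) by ring.
    rewrite H. ring.
  - rewrite tech5, Rmult_plus_distr_l, IHJ. simpl psum.
    replace (lam q n * (w (S J) * y m (S J) * y n (S J))) with (y m (S J) * (lam q n * (w (S J) * y n (S J)))) by ring.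
    rewrite PW. ring.
Qed.

Lemma ex_wyy m n : ex_series (fun j => w j * y m j * y n j).
Proof.
  apply (ex_series_bnd q _ ((1 - q) * Bn q m * Bn q n)); [lra|].
  intros j. unfold w. rewrite !Rabs_mult. rewrite (Rabs_right (1 - q)) by lra.
  rewrite (Rabs_right (q ^ j)) by (apply Rle_ge, pow_le; lra).
  pose proof (y_bound m j). pose proof (y_bound n j).
  pose proof (Rabs_pos (y m j)). pose proof (Rabs_pos (y n j)).
  pose proof (pow_pos' q hq0 j).
  assert (0 <= 1 - q) by lra.
  apply (Rle_trans _ ((1 - q) * q ^ j * Bn q m * Rabs (y n j))).
  { repeat apply Rmult_le_compat_r; auto. apply Rmult_le_compat_l; nra. }
  replace ((1 - q) * Bn q m * Bn q n * q ^ j) with ((1 - q) * q ^ j * Bn q m * Bn q n) by ring.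
  apply Rmult_le_compat_l; [|auto]. pose proof (Bn_nonneg q m).
  apply Rmult_le_pos; [apply Rmult_le_pos|]; lra.
Qed.

Definition ip (m n : nat) : R := Series (fun j => w j * y m j * y n j).

Lemma lam_lt n : lam q n < lam q (S n).
Proof.
  unfold lam. set (v := q ^ n).
  assert (0 < v) by (apply pow_pos'; auto).
  assert (v <= 1) by (apply pow_le1; auto).
  replace (q ^ S n) with (q * v) by reflexivity.
  replace (q ^ S (S n)) with (q * (q * v)) by reflexivity.
  apply Rminus_gt_0_lt.
  replace ((1 - q * v) * (1 - q * (q * v)) / (q * v) - (1 - v) * (1 - q * v) / v)
    with ((1 - q * v) * (1 - q) * (1 + q * v) / (q * v)) by (field; nz).
  apply Rdiv_lt_0_compat; [|nra].
  apply Rmult_lt_0_compat; [|nra]. apply Rmult_lt_0_compat; nra.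
Qed.

Lemma lam_mono m n : (m < n)%nat -> lam q m < lam q n.
Proof.
  intros H. induction H. apply lam_lt. eapply Rlt_trans; [exact IHle|apply lam_lt].
Qed.

Lemma orth m n : m <> n -> ip m n = 0.
Proof.
  intros Hmn.
  assert (Hl : lam q n - lam q m <> 0).
  { destruct (Nat.lt_gt_cases m n) as [[H|H] _]; auto.
    - pose proof (lam_mono m n H). lra.
    - pose proof (lam_mono n m H). lra. }
  apply (Rmult_eq_reg_l (lam q n - lam q m)); auto. rewrite Rmult_0_r.
  apply (lim_zero_geom q (fun J => sum_f_R0 (fun j => w j * y m j * y n j) J) _ _
    ((1 - q) * (Bn q m * Ln q n + Bn q n * Ln q m))); [lra| apply ser_lim, ex_wyy |].
  intros J.
  rewrite Rmult_minus_distr_r, SBP.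
  replace (lam q m * sum_f_R0 (fun j => w j * y m j * y n j) J)
    with (lam q m * sum_f_R0 (fun j => w j * y n j * y m j) J)
    by (f_equal; apply sum_eq; intros; ring).
  rewrite SBP.
  replace (psum (fun j => G m j * (y n (S j) - y n j)) J)
    with (psum (fun j => G n j * (y m (S j) - y m j)) J).
  2: { clear. induction J; simpl; auto. rewrite IHJ. unfold G. f_equal. ring. }
  replace ((1 - q) * (y m J * G n J - psum (fun j : nat => G n j * (y m (S j) - y m j)) J) -
    (1 - q) * (y n J * G m J - psum (fun j : nat => G n j * (y m (S j) - y m j)) J))
    with ((1 - q) * (y m J * G n J - y n J * G m J)) by ring.
  rewrite Rabs_mult, (Rabs_right (1 - q)) by lra.
  rewrite Rmult_assoc. apply Rmult_le_compat_l; [lra|].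
  eapply Rle_trans; [apply Rabs_sub_le|]. rewrite !Rabs_mult.
  pose proof (y_bound m J). pose proof (y_bound n J). pose proof (G_bound n J). pose proof (G_bound m J).
  pose proof (Rabs_pos (y m J)). pose proof (Rabs_pos (y n J)). pose proof (Rabs_pos (G n J)). pose proof (Rabs_pos (G m J)).
  pose proof (Bn_nonneg q m). pose proof (Bn_nonneg q n).
  apply (Rle_trans _ (Bn q m * (Ln q n * q ^ J) + Bn q n * (Ln q m * q ^ J))).
  - apply Rplus_le_compat; apply Rmult_le_compat; auto.
  - right. ring.
Qed.

End Orth.


Section Norms.
Variable q : R.
Hypothesis hq0 : 0 < q.
Hypothesis hq1 : q < 1.

Lemma y0 j : y q 0 j = 1.
Proof. unfold y. apply P0; auto. Qed.

Lemma y1 j : y q 1 j = 1 - (1 + q) * q ^ j.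
Proof. unfold y. apply P1; auto. Qed.

Lemma y_rec n j : (1 <= n)%nat ->
  (1 - (1 + q) * q ^ j) * y q n j =
  a_coef q n * y q (S n) j + b_coef q n * y q n j + c_coef q n * y q (pred n) j.
Proof. intros. unfold y. apply P_rec'; auto. Qed.

Lemma ser_expand3 a b c A B C D :
  Series (fun j => w q j * (a * y q A j + b * y q B j + c * y q C j) * y q D j)
  = a * ip q A D + b * ip q B D + c * ip q C D.
Proof.
  rewrite (Series_ext _ (fun j => a * (w q j * y q A j * y q D j) + b * (w q j * y q B j * y q D j)
     + c * (w q j * y q C j * y q D j))) by (intros; ring).
  apply ser_lin3; apply ex_wyy; auto.
Qed.

Lemma ip_sym m n : ip q m n = ip q n m.
Proof. unfold ip. apply Series_ext. intros; ring. Qed.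

Lemma ip00 : ip q 0 0 = 1.
Proof.
  unfold ip. rewrite (Series_ext _ (fun j => (1 - q) * q ^ j)) by (intros; rewrite y0; unfold w; ring).
  rewrite Series_scal_l, Series_geom. field. lra. rewrite Rabs_right; lra.
Qed.

Lemma norm_step n : (1 <= n)%nat -> a_coef q n * ip q (S n) (S n) = c_coef q (S n) * ip q n n.
Proof.
  intros Hn.
  set (F := fun j => w q j * ((1 - (1 + q) * q ^ j) * y q n j) * y q (S n) j).
  assert (E1 : Series F = a_coef q n * ip q (S n) (S n)).
  { unfold F. rewrite (Series_ext _ (fun j => w q j * (a_coef q n * y q (S n) j + b_coef q n * y q n j + c_coef q n * y q (pred n) j) * y q (S n) j))
      by (intros; rewrite y_rec; auto).
    rewrite ser_expand3. rewrite (orth q hq0 hq1 n (S n)) by lia.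
    rewrite (orth q hq0 hq1 (pred n) (S n)) by lia. ring. }
  assert (E2 : Series F = c_coef q (S n) * ip q n n).
  { unfold F. rewrite (Series_ext _ (fun j => w q j * (a_coef q (S n) * y q (S (S n)) j + b_coef q (S n) * y q (S n) j + c_coef q (S n) * y q n j) * y q n j)).
    2: { intros j. pose proof (y_rec (S n) j ltac:(lia)) as Hr. simpl pred in Hr. rewrite <- Hr. ring. }
    rewrite ser_expand3. rewrite (orth q hq0 hq1 (S (S n)) n) by lia.
    rewrite (orth q hq0 hq1 (S n) n) by lia. ring. }
  rewrite <- E1, <- E2. reflexivity.
Qed.

Lemma norm1 : ip q 1 1 = c_coef q 1 * ip q 0 0.
Proof.
  set (F := fun j => w q j * ((1 - (1 + q) * q ^ j) * y q 0 j) * y q 1 j).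
  assert (E1 : Series F = ip q 1 1).
  { unfold F, ip. apply Series_ext. intros. rewrite y0, y1. ring. }
  assert (E2 : Series F = c_coef q 1 * ip q 0 0).
  { unfold F. rewrite (Series_ext _ (fun j => w q j * (a_coef q 1 * y q 2 j + b_coef q 1 * y q 1 j + c_coef q 1 * y q 0 j) * y q 0 j)).
    2: { intros j. pose proof (y_rec 1 j ltac:(lia)) as Hr. simpl pred in Hr. rewrite <- Hr. rewrite y0. ring. }
    rewrite ser_expand3. rewrite (orth q hq0 hq1 2 0) by lia.
    rewrite (orth q hq0 hq1 1 0) by lia. ring. }
  rewrite <- E1, <- E2. reflexivity.
Qed.

Lemma hw_eq n : hw q n = (1 - q * (q ^ n) ^ 2) / ((1 - q) * q ^ n).
Proof.
  unfold hw. f_equal. f_equal.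
  replace (2 * n + 1)%nat with (S (n + n)) by lia. simpl. rewrite pow_add. ring.
Qed.

Lemma hw_pos n : 0 < hw q n.
Proof.
  rewrite hw_eq. set (u := q ^ n).
  assert (0 < u) by (apply pow_pos'; auto). assert (u <= 1) by (apply pow_le1; auto).
  apply Rdiv_lt_0_compat; [|apply Rmult_lt_0_compat; lra]. assert (u ^ 2 <= 1) by (simpl; nra). assert (q * u ^ 2 < 1) by nra. lra.
Qed.

Lemma hw_rel n : (1 <= n)%nat -> hw q (S n) * c_coef q (S n) = hw q n * a_coef q n.
Proof.
  intros Hn. destruct n as [|k]; [lia|].
  rewrite c_coef_S, a_coef_S by auto. rewrite !hw_eq.
  set (u := q ^ S k).
  replace (q ^ S (S k)) with (q * u) by reflexivity.
  assert (0 < u) by (apply pow_pos'; auto). assert (u < 1) by (apply pow_lt1; auto; lia).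
  unfold au, cu. assert (q * u < 1) by nra.
  assert (u ^ 2 <= 1) by (simpl; nra). assert (q * u ^ 2 < 1) by nra. assert ((q * u) ^ 2 <= 1) by (simpl; nra). assert (q * (q * u) ^ 2 < 1) by nra.
  field. nz.
Qed.

Lemma hw1 : hw q 1 * c_coef q 1 = 1.
Proof.
  rewrite hw_eq. unfold c_coef. simpl. field. nz.
Qed.

Lemma hw0 : hw q 0 = 1.
Proof. unfold hw. simpl. field. lra. Qed.

Lemma norm_eq n : ip q n n = / hw q n.
Proof.
  induction n.
  - rewrite ip00, hw0. field.
  - destruct n.
    + rewrite norm1, ip00. pose proof hw1. pose proof (hw_pos 1).
      apply (Rmult_eq_reg_l (hw q 1)); [|lra]. rewrite Rinv_r by lra. lra.
    + pose proof (norm_step (S n) ltac:(lia)) as H.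
      pose proof (hw_rel (S n) ltac:(lia)) as H2.
      pose proof (a_pos q hq0 hq1 (S n)). pose proof (hw_pos (S n)). pose proof (hw_pos (S (S n))).
      rewrite IHn in H.
      apply (Rmult_eq_reg_l (a_coef q (S n))); [|lra]. rewrite H.
      apply (Rmult_eq_reg_l (hw q (S (S n)))); [|lra].
      replace (hw q (S (S n)) * (c_coef q (S (S n)) * / hw q (S n))) with
        ((hw q (S (S n)) * c_coef q (S (S n))) * / hw q (S n)) by ring.
      rewrite H2. field. lra.
Qed.

Lemma ip_eq m n : ip q m n = if Nat.eq_dec m n then / hw q n else 0.
Proof.
  destruct (Nat.eq_dec m n). subst. apply norm_eq. apply orth; auto.
Qed.

End Norms.


Lemma sum_zero_ext f N : (forall k, (k <= N)%nat -> f k = 0) -> sum_f_R0 f N = 0.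
Proof.
  intros H. induction N; simpl. apply H; lia.
  rewrite IHN by (intros; apply H; lia). rewrite H by lia. ring.
Qed.

Lemma sum_ext_zero f N M : (forall k, (N < k)%nat -> f k = 0) -> (N <= M)%nat ->
  sum_f_R0 f M = sum_f_R0 f N.
Proof.
  intros H HM. induction HM. reflexivity. simpl. rewrite IHHM, H by lia. ring.
Qed.

Lemma sum_single f N i : (forall k, k <> i -> f k = 0) ->
  sum_f_R0 f N = if Compare_dec.le_dec i N then f i else 0.
Proof.
  intros H. induction N.
  - simpl. destruct (Compare_dec.le_dec i 0).
    + assert (i = 0%nat) by lia. subst; auto.
    + apply H. lia.
  - simpl. rewrite IHN. destruct (Compare_dec.le_dec i N), (Compare_dec.le_dec i (S N)); try lia.
    + rewrite (H (S N)) by lia. ring.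
    + assert (i = S N) by lia. subst. ring.
    + rewrite H by lia. ring.
Qed.

Lemma SeriesSum (F : nat -> nat -> R) N : (forall k, ex_series (F k)) ->
  ex_series (fun j => sum_f_R0 (fun k => F k j) N) /\
  Series (fun j => sum_f_R0 (fun k => F k j) N) = sum_f_R0 (fun k => Series (F k)) N.
Proof.
  intros H. induction N.
  - simpl. split; auto.
  - destruct IHN as [H1 H2]. simpl. split.
    + apply (ex_series_plus (fun j => sum_f_R0 (fun k => F k j) N) (F (S N))); auto.
    + rewrite Series_plus; auto. rewrite H2. reflexivity.
Qed.

Section Lin.
Variable q : R.
Hypothesis hq0 : 0 < q.
Hypothesis hq1 : q < 1.

Definition InSpan (N : nat) (F : R -> R) : Prop :=
  exists c : nat -> R, (forall k, (N < k)%nat -> c k = 0) /\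
    forall x, F x = sum_f_R0 (fun k => c k * Rleg q k x) N.

Lemma InSpan_ext N F G : (forall x, F x = G x) -> InSpan N F -> InSpan N G.
Proof. intros H [c [H1 H2]]. exists c; split; auto. intros; rewrite <- H; auto. Qed.

Lemma InSpan_mono N M F : (N <= M)%nat -> InSpan N F -> InSpan M F.
Proof.
  intros HM [c [H1 H2]]. exists c. split. intros; apply H1; lia.
  intros x. rewrite H2. symmetry. apply sum_ext_zero; auto. intros; rewrite H1; auto; ring.
Qed.

Lemma InSpan_lin N a b F G : InSpan N F -> InSpan N G -> InSpan N (fun x => a * F x + b * G x).
Proof.
  intros [c [H1 H2]] [d [H3 H4]]. exists (fun k => a * c k + b * d k). split.
  - intros. rewrite H1, H3 by auto. ring.
  - intros x. rewrite H2, H4. rewrite !scal_sum, <- plus_sum. apply sum_eq. intros; ring.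
Qed.

Lemma InSpan_R k : InSpan k (Rleg q k).
Proof.
  exists (fun i => if Nat.eq_dec i k then 1 else 0). split.
  - intros i Hi. destruct (Nat.eq_dec i k); [lia|auto].
  - intros x. rewrite (sum_single _ k k).
    + destruct (Compare_dec.le_dec k k); [|lia]. destruct (Nat.eq_dec k k); [ring|lia].
    + intros i Hi. destruct (Nat.eq_dec i k); [lia|ring].
Qed.

Lemma InSpan_sum M N (c : nat -> R) (G : nat -> R -> R) :
  (forall k, (k <= N)%nat -> InSpan M (G k)) -> InSpan M (fun x => sum_f_R0 (fun k => c k * G k x) N).
Proof.
  intros H. induction N.
  - simpl. apply (InSpan_ext _ (fun x => c 0%nat * G 0%nat x + 0 * G 0%nat x)). intros; ring.
    apply InSpan_lin; apply H; lia.
  - simpl. apply (InSpan_ext _ (fun x => 1 * sum_f_R0 (fun k => c k * G k x) N + c (S N) * G (S N) x)).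
    intros; ring. apply InSpan_lin. apply IHN; intros; apply H; lia. apply H; lia.
Qed.

Lemma Rleg_rec k x : (1 <= k)%nat ->
  Defs.R1 q x * Rleg q k x = a_coef q k * Rleg q (S k) x + b_coef q k * Rleg q k x + c_coef q k * Rleg q (pred k) x.
Proof.
  intros Hk. rewrite !Rleg_P by auto. rewrite R1_eq by auto. apply P_rec'; auto.
Qed.

Lemma Rleg_0 x : Rleg q 0 x = 1.
Proof. rewrite Rleg_P by auto. apply P0; auto. Qed.

Lemma Rleg_1 x : Rleg q 1 x = Defs.R1 q x.
Proof. rewrite Rleg_P, R1_eq by auto. apply P1; auto. Qed.

Lemma x_eq x : x = a_coef q 0 * Defs.R1 q x + b_coef q 0.
Proof. unfold Defs.R1. simpl. field. lra. Qed.

Lemma InSpan_xR k : InSpan (S k) (fun x => x * Rleg q k x).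
Proof.
  destruct k.
  - apply (InSpan_ext _ (fun x => a_coef q 0 * Rleg q 1 x + b_coef q 0 * Rleg q 0 x)).
    { intros x. rewrite Rleg_1, Rleg_0. pose proof (x_eq x) as Hx. nra. }
    apply InSpan_lin. apply InSpan_R. apply (InSpan_mono 0); auto. apply InSpan_R.
  - apply (InSpan_ext _ (fun x => a_coef q 0 * (a_coef q (S k) * Rleg q (S (S k)) x + b_coef q (S k) * Rleg q (S k) x + c_coef q (S k) * Rleg q k x) + b_coef q 0 * Rleg q (S k) x)).
    { intros x. pose proof (Rleg_rec (S k) x ltac:(lia)) as Hr. simpl pred in Hr. rewrite <- Hr.
      pose proof (x_eq x) as Hx. nra. }
    apply InSpan_lin; [|apply (InSpan_mono (S k)); auto; apply InSpan_R].
    apply (InSpan_ext _ (fun x => 1 * (a_coef q (S k) * Rleg q (S (S k)) x + b_coef q (S k) * Rleg q (S k) x) + c_coef q (S k) * Rleg q k x)).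
    { intros; ring. }
    apply InSpan_lin; [apply InSpan_lin|].
    + apply InSpan_R.
    + apply (InSpan_mono (S k)); auto; apply InSpan_R.
    + apply (InSpan_mono k); auto; apply InSpan_R.
Qed.

Lemma InSpan_x N F : InSpan N F -> InSpan (S N) (fun x => x * F x).
Proof.
  intros [c [H1 H2]].
  apply (InSpan_ext _ (fun x => sum_f_R0 (fun k => c k * (fun k x => x * Rleg q k x) k x) N)).
  { intros x. rewrite H2, scal_sum. apply sum_eq; intros; ring. }
  apply InSpan_sum. intros k Hk. apply (InSpan_mono (S k)); [lia|]. apply InSpan_xR.
Qed.

Lemma InSpan_R1 N F : InSpan N F -> InSpan (S N) (fun x => Defs.R1 q x * F x).
Proof.
  intros H.
  apply (InSpan_ext _ (fun x => (/ a_coef q 0) * (x * F x) + (- b_coef q 0 / a_coef q 0) * F x)).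
  { intros x. pose proof (a_pos q hq0 hq1 0). unfold Defs.R1. field. nz. }
  apply InSpan_lin. apply InSpan_x; auto. apply (InSpan_mono N); auto.
Qed.

Lemma InSpan_prod_aux m : (forall n, InSpan (m + n) (fun x => Rleg q m x * Rleg q n x)) /\
  (forall n, InSpan (S m + n) (fun x => Rleg q (S m) x * Rleg q n x)).
Proof.
  induction m.
  - split.
    + intros n. simpl. apply (InSpan_ext _ (Rleg q n)). intros; rewrite Rleg_0; ring. apply InSpan_R.
    + intros n. apply (InSpan_ext _ (fun x => Defs.R1 q x * Rleg q n x)). intros; rewrite Rleg_1; ring.
      apply InSpan_R1. apply InSpan_R.
  - destruct IHm as [H1 H2]. split; auto.
    intros n.
    apply (InSpan_ext _ (fun x => (/ a_coef q (S m)) * (Defs.R1 q x * (Rleg q (S m) x * Rleg q n x))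
      + (- b_coef q (S m) / a_coef q (S m)) * (Rleg q (S m) x * Rleg q n x)
      + (- c_coef q (S m) / a_coef q (S m)) * (Rleg q m x * Rleg q n x))).
    { intros x. pose proof (Rleg_rec (S m) x ltac:(lia)) as Hr. simpl pred in Hr.
      pose proof (a_pos q hq0 hq1 (S m)).
      assert (Rleg q (S (S m)) x = (Defs.R1 q x * Rleg q (S m) x - b_coef q (S m) * Rleg q (S m) x - c_coef q (S m) * Rleg q m x) / a_coef q (S m)).
      { rewrite Hr. field. lra. }
      rewrite H0. field. lra. }
    apply (InSpan_ext _ (fun x => 1 * ((/ a_coef q (S m)) * (Defs.R1 q x * (Rleg q (S m) x * Rleg q n x))
      + (- b_coef q (S m) / a_coef q (S m)) * (Rleg q (S m) x * Rleg q n x))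
      + (- c_coef q (S m) / a_coef q (S m)) * (Rleg q m x * Rleg q n x))). intros; ring.
    apply InSpan_lin; [apply InSpan_lin|].
    + replace (S (S m) + n)%nat with (S (S m + n)) by lia. apply InSpan_R1. apply H2.
    + apply (InSpan_mono (S m + n)); [lia|]. apply H2.
    + apply (InSpan_mono (m + n)); [lia|]. apply H1.
Qed.

Lemma lin_exists m n : exists c, is_lin_coeff q m n c.
Proof.
  destruct (proj1 (InSpan_prod_aux m) n) as [c [H1 H2]]. exists c. split; auto.
Qed.

Lemma gcoef_spec m n : is_lin_coeff q m n (gcoef q m n).
Proof.
  unfold gcoef. apply epsilon_spec. apply lin_exists.
Qed.

Lemma y_Rleg n j : y q n j = Rleg q n (1 - q ^ j).
Proof. unfold y. rewrite Rleg_P by auto. f_equal. ring. Qed.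

Lemma lin_y a b c j : is_lin_coeff q a b c ->
  y q a j * y q b j = sum_f_R0 (fun k => c k * y q k j) (a + b).
Proof.
  intros [H1 H2]. rewrite !y_Rleg, H2. apply sum_eq. intros. rewrite y_Rleg. reflexivity.
Qed.

Lemma charac a b d c : is_lin_coeff q a b c ->
  c d * ip q d d = Series (fun j => w q j * y q a j * y q b j * y q d j).
Proof.
  intros H.
  rewrite (Series_ext _ (fun j => sum_f_R0 (fun k => c k * (w q j * y q k j * y q d j)) (a + b))).
  2: { intros j. replace (w q j * y q a j * y q b j * y q d j) with ((w q j * y q d j) * (y q a j * y q b j)) by ring.
       rewrite (lin_y a b c j H), scal_sum. apply sum_eq. intros. ring. }
  destruct (SeriesSum (fun k j => c k * (w q j * y q k j * y q d j)) (a + b)) as [_ E].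
  { intros k. apply (ex_series_scal_l (c k) (fun j => w q j * y q k j * y q d j)). apply ex_wyy; auto. }
  rewrite E.
  rewrite (sum_single _ _ d).
  - destruct (Compare_dec.le_dec d (a + b)).
    + rewrite Series_scal_l. reflexivity.
    + destruct H as [H1 _]. rewrite H1 by lia. ring.
  - intros k Hk. rewrite Series_scal_l. fold (ip q k d). rewrite orth by auto. ring.
Qed.

Lemma ipdd_pos d : 0 < ip q d d.
Proof. rewrite norm_eq by auto. apply Rinv_0_lt_compat, hw_pos; auto. Qed.

Lemma lin_vanish m n c i : is_lin_coeff q m n c ->
  ((i + m < n)%nat \/ (i + n < m)%nat) -> c i = 0.
Proof.
  intros H Hi. pose proof (ipdd_pos i) as Hp.
  apply (Rmult_eq_reg_r (ip q i i)); [|lra]. rewrite Rmult_0_l, (charac m n i c H).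
  destruct Hi as [Hi|Hi].
  - rewrite (Series_ext _ (fun j => w q j * y q m j * y q i j * y q n j)) by (intros; ring).
    rewrite <- (charac m i n (gcoef q m i) (gcoef_spec m i)).
    destruct (gcoef_spec m i) as [H1 _]. rewrite H1 by lia. ring.
  - rewrite (Series_ext _ (fun j => w q j * y q n j * y q i j * y q m j)) by (intros; ring).
    rewrite <- (charac n i m (gcoef q n i) (gcoef_spec n i)).
    destruct (gcoef_spec n i) as [H1 _]. rewrite H1 by lia. ring.
Qed.

Lemma gcoef_0nn n : gcoef q 0 n n = 1.
Proof.
  pose proof (ipdd_pos n).
  apply (Rmult_eq_reg_r (ip q n n)); [|lra].
  rewrite (charac 0 n n _ (gcoef_spec 0 n)). rewrite Rmult_1_l. unfold ip.
  apply Series_ext. intros. rewrite y0 by auto. ring.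
Qed.

End Lin.


Lemma Series_zero : Series (fun _ => 0) = 0.
Proof. rewrite (Series_ext _ (fun n => 0 * 1)) by (intros; ring). rewrite Series_scal_l. ring. Qed.

Lemma Series_nonneg a : ex_series a -> (forall n, 0 <= a n) -> 0 <= Series a.
Proof.
  intros He H. rewrite <- Series_zero. apply Series_le; auto. intros; split; [lra|auto].
Qed.

Lemma partial_le_Series a N : ex_series a -> (forall n, 0 <= a n) -> sum_f_R0 a N <= Series a.
Proof.
  intros He H. rewrite (Series_incr_n a (S N)) by (auto; lia). simpl pred.
  assert (0 <= Series (fun k => a (S N + k)%nat)).
  { apply Series_nonneg; auto. apply (ex_series_incr_n a (S N)). auto. }
  lra.
Qed.

Lemma term_le_Series a j : ex_series a -> (forall n, 0 <= a n) -> a j <= Series a.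
Proof.
  intros He H. eapply Rle_trans; [|apply (partial_le_Series a j); auto].
  destruct j. simpl; lra. rewrite tech5. assert (0 <= sum_f_R0 a j) by (apply cond_pos_sum; auto). lra.
Qed.

Lemma Series_le_bound a B : (forall n, 0 <= a n) -> (forall N, sum_f_R0 a N <= B) ->
  ex_series a /\ Series a <= B.
Proof.
  intros Hpos HB.
  assert (Hex : ex_series a).
  { apply ex_series_Reals_1.
    destruct (completeness (fun x => exists N, x = sum_f_R0 a N)) as [l [Hl1 Hl2]].
    - exists B. intros x [N ->]. apply HB.
    - exists (a 0%nat). exists 0%nat. reflexivity.
    - exists l. intros eps Heps.
      assert (exists N, l - eps < sum_f_R0 a N).
      { apply NNPP. intros Hn. assert (l <= l - eps); [|lra].
        apply Hl2. intros x [N ->]. apply Rnot_lt_le. intros Hc. apply Hn. exists N; auto. }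
      destruct H as [N HN]. exists N. intros n Hn. unfold Rdist.
      assert (sum_f_R0 a N <= sum_f_R0 a n).
      { induction Hn. lra. simpl. pose proof (Hpos (S m)). lra. }
      assert (sum_f_R0 a n <= l) by (apply Hl1; exists n; auto).
      rewrite Rabs_left1; lra. }
  split; auto.
  pose proof (ser_lim a Hex).
  assert (Rbar_le (Series a) B).
  { apply (is_lim_seq_le (fun N => sum_f_R0 a N) (fun _ => B)); auto. apply is_lim_seq_const. }
  simpl in H0. auto.
Qed.

Section Bessel.
Variable q : R.
Hypothesis hq0 : 0 < q.
Hypothesis hq1 : q < 1.

Definition comb (b : nat -> R) (M i : nat) : R := sum_f_R0 (fun n => b n * y q n i) M.

Lemma ip_y_comb g M n :
  ex_series (fun i => w q i * y q n i * comb g M i) /\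
  Series (fun i => w q i * y q n i * comb g M i) = if Compare_dec.le_dec n M then g n * ip q n n else 0.
Proof.
  destruct (SeriesSum (fun m i => g m * (w q i * y q n i * y q m i)) M) as [H1 H2].
  { intros m. apply (ex_series_scal_l (g m) (fun i => w q i * y q n i * y q m i)). apply ex_wyy; auto. }
  assert (E : forall i, w q i * y q n i * comb g M i = sum_f_R0 (fun m => g m * (w q i * y q n i * y q m i)) M).
  { intros i. unfold comb. rewrite scal_sum. apply sum_eq. intros; ring. }
  split.
  - eapply ex_series_ext; [|exact H1]. intros; rewrite E; auto.
  - rewrite (Series_ext _ _ E), H2.
    rewrite (sum_single _ _ n).
    + destruct (Compare_dec.le_dec n M); [|auto]. rewrite Series_scal_l. reflexivity.
    + intros m Hm. rewrite Series_scal_l. fold (ip q n m). rewrite orth by auto. ring.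
Qed.

Lemma ip_comb b g M :
  ex_series (fun i => w q i * comb b M i * comb g M i) /\
  Series (fun i => w q i * comb b M i * comb g M i) = sum_f_R0 (fun n => b n * g n * ip q n n) M.
Proof.
  destruct (SeriesSum (fun n i => b n * (w q i * y q n i * comb g M i)) M) as [H1 H2].
  { intros n. apply (ex_series_scal_l (b n) (fun i => w q i * y q n i * comb g M i)). apply ip_y_comb. }
  assert (E : forall i, w q i * comb b M i * comb g M i = sum_f_R0 (fun n => b n * (w q i * y q n i * comb g M i)) M).
  { intros i. transitivity ((w q i * comb g M i) * sum_f_R0 (fun n => b n * y q n i) M).
    { unfold comb at 1. ring. }
    rewrite scal_sum. apply sum_eq. intros; ring. }
  split.
  - eapply ex_series_ext; [|exact H1]. intros; rewrite E; auto.
  - rewrite (Series_ext _ _ E), H2. apply sum_eq. intros n Hn.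
    rewrite Series_scal_l. rewrite (proj2 (ip_y_comb g M n)).
    destruct (Compare_dec.le_dec n M); [ring|lia].
Qed.

Lemma bessel j M : sum_f_R0 (fun n => hw q n * y q n j ^ 2) M <= / w q j.
Proof.
  set (A := sum_f_R0 (fun n => hw q n * y q n j ^ 2) M).
  set (b := fun n => hw q n * y q n j).
  assert (HA : 0 <= A).
  { apply cond_pos_sum. intros k. pose proof (hw_pos q hq0 hq1 k). simpl. pose proof (Rle_0_sqr (y q k j)). unfold Rsqr in *. nra. }
  assert (Hv : comb b M j = A).
  { unfold comb, A, b. apply sum_eq. intros; simpl; ring. }
  destruct (ip_comb b b M) as [Hex Hs].
  assert (HsA : Series (fun i => w q i * comb b M i * comb b M i) = A).
  { rewrite Hs. unfold A, b. apply sum_eq. intros n _. rewrite norm_eq by auto.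
    pose proof (hw_pos q hq0 hq1 n). field. lra. }
  assert (Hle : w q j * comb b M j * comb b M j <= A).
  { rewrite <- HsA. apply (term_le_Series (fun i => w q i * comb b M i * comb b M i)); auto.
    intros n. pose proof (w_pos q hq0 hq1 n). rewrite Rmult_assoc. apply Rmult_le_pos; [lra|].
    apply Rle_0_sqr. }
  rewrite Hv in Hle. pose proof (w_pos q hq0 hq1 j).
  destruct (Req_dec A 0) as [H0|H0].
  - rewrite H0. apply Rlt_le, Rinv_0_lt_compat; auto.
  - assert (w q j * A <= 1).
    { apply (Rmult_le_reg_r A); [lra|]. nra. }
    apply (Rmult_le_reg_l (w q j)); auto. rewrite Rinv_r by lra. lra.
Qed.

End Bessel.

Lemma geom_partial q M : 0 < q < 1 -> sum_f_R0 (fun n => q ^ n) M <= / (1 - q).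
Proof.
  intros Hq. pose proof (GP_finite q M).
  assert (0 < q ^ (M + 1)) by (apply pow_lt; lra).
  apply (Rmult_le_reg_r (1 - q)); [lra|]. rewrite Rinv_l by lra. nra.
Qed.

Section Key.
Variable q : R.
Hypothesis hq0 : 0 < q.
Hypothesis hq1 : q < 1.

Definition hl (n : nat) : R := match n with O => 0 | S _ => hw q n / lam q n end.
Definition hl2 (n : nat) : R := match n with O => 0 | S _ => hw q n / (lam q n) ^ 2 end.

Lemma hw_lam_bounds n : (1 <= n)%nat ->
  0 < lam q n /\ hw q n / lam q n <= / (1 - q) ^ 3 /\ hw q n / (lam q n) ^ 2 <= q ^ n / (1 - q) ^ 5.
Proof.
  intros Hn. rewrite hw_eq by auto. unfold lam.
  set (u := q ^ n).
  assert (0 < u) by (apply pow_pos'; auto).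
  assert (u <= q).
  { unfold u. destruct n; [lia|]. simpl. pose proof (pow_le1 q hq0 hq1 n). nra. }
  replace (q ^ S n) with (q * u) by reflexivity.
  assert (Hl : (1 - q) ^ 2 / u <= (1 - u) * (1 - q * u) / u).
  { apply Rmult_le_compat_r. left; apply Rinv_0_lt_compat; auto. simpl. assert (1 - q <= 1 - u) by lra. assert (1 - q <= 1 - q * u) by nra. rewrite Rmult_1_r. apply Rmult_le_compat; lra. }
  assert (0 < (1 - q) ^ 2 / u) by (apply Rdiv_lt_0_compat; [simpl; nra|auto]).
  assert (Hh : (1 - q * u ^ 2) / ((1 - q) * u) <= / ((1 - q) * u)).
  { unfold Rdiv. rewrite <- (Rmult_1_l (/ ((1 - q) * u))) at 2. apply Rmult_le_compat_r.
    left; apply Rinv_0_lt_compat; nra. simpl. nra. }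
  assert (0 <= (1 - q * u ^ 2) / ((1 - q) * u)).
  { apply Rdiv_le_0_compat; [simpl; nra|nra]. }
  set (L := (1 - u) * (1 - q * u) / u) in *.
  set (HH := (1 - q * u ^ 2) / ((1 - q) * u)) in *.
  split; [lra|]. split.
  - apply (Rle_trans _ (/ ((1 - q) * u) / ((1 - q) ^ 2 / u))).
    + unfold Rdiv. apply Rmult_le_compat; auto. left; apply Rinv_0_lt_compat; lra.
      apply Rinv_le_contravar; auto.
    + right. field. nz.
  - apply (Rle_trans _ (/ ((1 - q) * u) / ((1 - q) ^ 2 / u) ^ 2)).
    + unfold Rdiv. apply Rmult_le_compat; auto. left; apply Rinv_0_lt_compat; simpl; nra.
      apply Rinv_le_contravar. simpl; nra. simpl. nra.
    + right. field. nz.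
Qed.

Lemma hl2_sum M : sum_f_R0 hl2 M <= / (1 - q) ^ 6.
Proof.
  apply (Rle_trans _ (sum_f_R0 (fun n => / (1 - q) ^ 5 * q ^ n) M)).
  - apply sum_Rle. intros n _. destruct n as [|n].
    + cbn [hl2]. pose proof (Rinv_0_lt_compat ((1 - q) ^ 5) (pow_lt (1 - q) 5 ltac:(lra))). rewrite pow_O. lra.
    + unfold hl2. destruct (hw_lam_bounds (S n) ltac:(lia)) as [_ [_ H]]. rewrite Rmult_comm. exact H.
  - replace (sum_f_R0 (fun n => / (1 - q) ^ 5 * q ^ n) M) with (/ (1 - q) ^ 5 * sum_f_R0 (fun n => q ^ n) M)
      by (rewrite scal_sum; apply sum_eq; intros; ring).
    pose proof (geom_partial q M ltac:(lra)).
    assert (0 < / (1 - q) ^ 5) by (apply Rinv_0_lt_compat; apply pow_lt; lra).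
    apply (Rle_trans _ (/ (1 - q) * / (1 - q) ^ 5)).
    + rewrite Rmult_comm. apply Rmult_le_compat_r; lra.
    + right. field. lra.
Qed.

Lemma amgm_term n eps yy : 0 < eps ->
  hl n * Rabs yy <= (eps * (hw q n * yy ^ 2) + hl2 n / eps) / 2.
Proof.
  intros He. pose proof (hw_pos q hq0 hq1 n) as Hh.
  destruct n.
  - simpl. assert (0 <= hw q 0 * (yy * (yy * 1))) by (apply Rmult_le_pos; nra).
    assert (0 < eps) by auto. nra.
  - unfold hl, hl2. destruct (hw_lam_bounds (S n) ltac:(lia)) as [Hl _].
    set (L := lam q (S n)) in *. set (h := hw q (S n)) in *.
    assert (Hk : 2 * Rabs yy / L <= eps * yy ^ 2 + / (L ^ 2 * eps)).
    { assert (0 <= (eps * Rabs yy - / L) ^ 2 / eps) by (apply Rdiv_le_0_compat; [apply pow2_ge_0|auto]).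
      assert (Rabs yy ^ 2 = yy ^ 2) by (apply pow2_abs).
      replace (eps * yy ^ 2 + / (L ^ 2 * eps)) with (2 * Rabs yy / L + (eps * Rabs yy - / L) ^ 2 / eps).
      lra. rewrite <- H0. field. nz. }
    replace (h / L * Rabs yy) with (h * (2 * Rabs yy / L) / 2) by (field; nz).
    replace ((eps * (h * yy ^ 2) + h / L ^ 2 / eps) / 2) with (h * (eps * yy ^ 2 + / (L ^ 2 * eps)) / 2) by (field; nz).
    apply Rmult_le_compat_r; [lra|]. apply Rmult_le_compat_l; lra.
Qed.

Definition K0 : R := (1 + / (1 - q) ^ 6) / 2.

Lemma key i M : sum_f_R0 (fun n => hl n * Rabs (y q n i)) M <= K0 / sqrt (w q i).
Proof.
  pose proof (w_pos q hq0 hq1 i) as Hw.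
  set (s := sqrt (w q i)).
  assert (Hs : 0 < s) by (apply sqrt_lt_R0; auto).
  assert (Hss : s * s = w q i) by (apply sqrt_sqrt; lra).
  apply (Rle_trans _ (sum_f_R0 (fun n => (s * (hw q n * y q n i ^ 2) + hl2 n / s) / 2) M)).
  { apply sum_Rle. intros. apply amgm_term; auto. }
  replace (sum_f_R0 (fun n => (s * (hw q n * y q n i ^ 2) + hl2 n / s) / 2) M)
    with ((s * sum_f_R0 (fun n => hw q n * y q n i ^ 2) M + sum_f_R0 hl2 M / s) / 2).
  2: { induction M. simpl. field. lra. rewrite !tech5, <- IHM. field. lra. }
  pose proof (bessel q hq0 hq1 i M). pose proof (hl2_sum M).
  unfold K0.
  apply (Rle_trans _ ((s * / w q i + / (1 - q) ^ 6 / s) / 2)).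
  - apply Rmult_le_compat_r; [lra|]. apply Rplus_le_compat.
    + apply Rmult_le_compat_l; lra.
    + unfold Rdiv. apply Rmult_le_compat_r; [left; apply Rinv_0_lt_compat; auto|auto].
  - right. rewrite <- Hss. field. lra.
Qed.

End Key.


Lemma sum_scal_l c f N : sum_f_R0 (fun i => c * f i) N = c * sum_f_R0 f N.
Proof. induction N; simpl; [|rewrite IHN]; ring. Qed.

Section G.
Variable q : R.
Hypothesis hq0 : 0 < q.
Hypothesis hq1 : q < 1.

Lemma G_bound2 n j : Rabs (G q n j) <= Rabs (y q n (S j)) + Rabs (y q n j).
Proof.
  unfold G. rewrite Rabs_mult.
  assert (Rabs (q ^ S j - 1) <= 1).
  { pose proof (qj_range q hq0 hq1 (S j)). rewrite Rabs_left1; lra. }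
  pose proof (Rabs_pos (q ^ S j - 1)). pose proof (Rabs_sub_le (y q n (S j)) (y q n j)).
  pose proof (Rabs_pos (y q n (S j) - y q n j)). nra.
Qed.

Lemma lam_y_bound n j : Rabs (lam q n * y q n j) <=
  / q ^ j * (Rabs (y q n (S j)) + 2 * Rabs (y q n j) + Rabs (y q n (pred j))).
Proof.
  pose proof (PW q hq0 hq1 n j) as H.
  pose proof (pow_pos' q hq0 j) as Hj.
  assert (E : lam q n * y q n j = / q ^ j * (G q n j - match j with O => 0 | S j' => G q n j' end)).
  { apply (Rmult_eq_reg_l ((1 - q) * q ^ j)); [|nz].
    replace ((1 - q) * q ^ j * (lam q n * y q n j)) with (lam q n * (w q j * y q n j)) by (unfold w; ring).
    rewrite H. field. lra. }
  rewrite E, Rabs_mult, Rabs_right by (apply Rle_ge; left; apply Rinv_0_lt_compat; auto).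
  apply Rmult_le_compat_l; [left; apply Rinv_0_lt_compat; auto|].
  eapply Rle_trans; [apply Rabs_sub_le|].
  pose proof (G_bound2 n j).
  destruct j as [|j'].
  - rewrite Rabs_R0. simpl pred. pose proof (Rabs_pos (y q n 0)). lra.
  - pose proof (G_bound2 n j'). simpl pred. lra.
Qed.

Lemma hw_y_term n j : hw q n * Rabs (y q n j) <=
  (if Nat.eq_dec n 0 then 1 else 0) +
  / q ^ j * (hl q n * Rabs (y q n (S j)) + 2 * (hl q n * Rabs (y q n j)) + hl q n * Rabs (y q n (pred j))).
Proof.
  destruct n as [|n].
  - simpl. rewrite y0, hw0 by auto. rewrite Rabs_R1. lra.
  - destruct (Nat.eq_dec (S n) 0); [lia|].
    destruct (hw_lam_bounds q hq0 hq1 (S n) ltac:(lia)) as [Hl _].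
    pose proof (lam_y_bound (S n) j) as Hb.
    unfold hl. set (L := lam q (S n)) in *.
    pose proof (hw_pos q hq0 hq1 (S n)).
    replace (hw q (S n) * Rabs (y q (S n) j)) with (hw q (S n) / L * Rabs (L * y q (S n) j)).
    2: { rewrite Rabs_mult, (Rabs_right L) by lra. field. lra. }
    apply (Rle_trans _ (hw q (S n) / L * (/ q ^ j * (Rabs (y q (S n) (S j)) + 2 * Rabs (y q (S n) j) + Rabs (y q (S n) (pred j)))))).
    + apply Rmult_le_compat_l; auto. left; apply Rdiv_lt_0_compat; lra.
    + right. ring.
Qed.

Definition isq (i : nat) : R := / sqrt (w q i).

Lemma alpha_l1 j : ex_series (fun n => Rabs (y q n j) * hw q n).
Proof.
  set (B := 1 + / q ^ j * (K0 q * isq (S j) + 2 * (K0 q * isq j) + K0 q * isq (pred j))).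
  apply (Series_le_bound _ B (fun n => Rmult_le_pos _ _ (Rabs_pos _) (Rlt_le _ _ (hw_pos q hq0 hq1 n)))).
  intros M.
  apply (Rle_trans _ (sum_f_R0 (fun n => (if Nat.eq_dec n 0 then 1 else 0) +
    / q ^ j * (hl q n * Rabs (y q n (S j)) + 2 * (hl q n * Rabs (y q n j)) + hl q n * Rabs (y q n (pred j)))) M)).
  { apply sum_Rle. intros. rewrite Rmult_comm. apply hw_y_term. }
  rewrite plus_sum. unfold B. apply Rplus_le_compat.
  - rewrite (sum_single _ _ 0). destruct (Compare_dec.le_dec 0 M); simpl; lra.
    intros k Hk. destruct (Nat.eq_dec k 0); [lia|auto].
  - rewrite sum_scal_l. apply Rmult_le_compat_l; [left; apply Rinv_0_lt_compat, pow_pos'; auto|].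
    rewrite !plus_sum. rewrite sum_scal_l.
    pose proof (key q hq0 hq1 (S j) M). pose proof (key q hq0 hq1 j M). pose proof (key q hq0 hq1 (pred j) M).
    unfold isq. unfold Rdiv in *. lra.
Qed.

End G.


Lemma ev_at0 c N : ev c N 0 = c 0%nat.
Proof. unfold ev. induction N; simpl. ring. rewrite IHN. ring. Qed.

Lemma psum_shift f J k : psum f (k + J) - psum f J = psum (fun i => f (i + J)%nat) k.
Proof. induction k; simpl. ring. rewrite <- IHk. ring. Qed.

Lemma psum_abs g k : Rabs (psum g k) <= psum (fun i => Rabs (g i)) k.
Proof.
  induction k; simpl. rewrite Rabs_R0; lra.
  eapply Rle_trans; [apply Rabs_triang|]. lra.
Qed.

Lemma psum_sum (f : nat -> R) k : psum f (S k) = sum_f_R0 f k.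
Proof. induction k. simpl. apply Rplus_0_l. change (psum f (S (S k))) with (psum f (S k) + f (S k)). rewrite IHk. reflexivity. Qed.

Lemma psum_le_Series (f : nat -> R) k : ex_series f -> (forall n, 0 <= f n) -> psum f k <= Series f.
Proof.
  intros He Hp. destruct k. simpl. apply Series_nonneg; auto.
  rewrite psum_sum. apply partial_le_Series; auto.
Qed.

Lemma psum_le f g k : (forall i, f i <= g i) -> psum f k <= psum g k.
Proof. intros H. induction k; simpl. lra. pose proof (H k). lra. Qed.

Section H.
Variable q : R.
Hypothesis hq0 : 0 < q.
Hypothesis hq1 : q < 1.

Lemma y_at0 n j : Rabs (y q n j - 1) <= Ln q n * q ^ j.
Proof.
  replace 1 with (P q n 0) by (unfold P; rewrite ev_at0; unfold Cc; simpl; field).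
  unfold y. eapply Rle_trans; [apply P_lip; [apply qj_range; auto|lra]|].
  rewrite Rminus_0_r, Rabs_right by (apply Rle_ge, pow_le; lra). lra.
Qed.

Lemma SBP_gen (z : nat -> R) n K : lam q n * sum_f_R0 (fun j => w q j * z j * y q n j) K =
  (1 - q) * (z K * G q n K - psum (fun j => G q n j * (z (S j) - z j)) K).
Proof.
  induction K.
  - simpl. pose proof (PW q hq0 hq1 n 0). simpl in H.
    replace (lam q n * (w q 0 * z 0%nat * y q n 0)) with (z 0%nat * (lam q n * (w q 0 * y q n 0))) by ring.
    rewrite H. ring.
  - rewrite tech5, Rmult_plus_distr_l, IHK. simpl psum.
    replace (lam q n * (w q (S K) * z (S K) * y q n (S K))) with (z (S K) * (lam q n * (w q (S K) * y q n (S K)))) by ring.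
    rewrite PW by auto. ring.
Qed.

Definition U (n j : nat) : R := q ^ j * (Rabs (y q n (S j)) + Rabs (y q n j)).

Lemma U_nonneg n j : 0 <= U n j.
Proof. unfold U. apply Rmult_le_pos. apply pow_le; lra. pose proof (Rabs_pos (y q n (S j))). pose proof (Rabs_pos (y q n j)). lra. Qed.

Lemma U_bound n j : U n j <= 2 * Bn q n * q ^ j.
Proof.
  unfold U. pose proof (y_bound q hq0 hq1 n (S j)). pose proof (y_bound q hq0 hq1 n j).
  pose proof (pow_pos' q hq0 j). nra.
Qed.

Definition T (J n : nat) : R := Series (fun i => U n (i + J)).

Lemma ex_U J n : ex_series (fun i => U n (i + J)).
Proof.
  apply (ex_series_bnd q _ (2 * Bn q n * q ^ J)); [lra|].
  intros i. rewrite Rabs_right by (apply Rle_ge, U_nonneg).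
  eapply Rle_trans; [apply U_bound|]. rewrite pow_add. right; ring.
Qed.

Lemma T_nonneg J n : 0 <= T J n.
Proof. apply Series_nonneg. apply ex_U. intros; apply U_nonneg. Qed.

Section Phi.
Variable m : nat.

Definition phi (j : nat) : R := hw q m * (y q m j - 1).
Definition Cm : R := hw q m * Ln q m.

Lemma Cm_nonneg : 0 <= Cm.
Proof. unfold Cm. apply Rmult_le_pos. left; apply hw_pos; auto. apply Ln_nonneg. Qed.

Lemma phi_bound j : Rabs (phi j) <= Cm * q ^ j.
Proof.
  unfold phi, Cm. rewrite Rabs_mult, Rabs_right by (apply Rle_ge; left; apply hw_pos; auto).
  rewrite Rmult_assoc. apply Rmult_le_compat_l. left; apply hw_pos; auto. apply y_at0.
Qed.

Lemma phi_diff j : Rabs (phi (S j) - phi j) <= Cm * q ^ j.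
Proof.
  unfold phi, Cm. replace (hw q m * (y q m (S j) - 1) - hw q m * (y q m j - 1)) with (hw q m * (y q m (S j) - y q m j)) by ring.
  rewrite Rabs_mult, Rabs_right by (apply Rle_ge; left; apply hw_pos; auto).
  rewrite Rmult_assoc. apply Rmult_le_compat_l. left; apply hw_pos; auto. apply y_diff; auto.
Qed.

Definition Sp (n J : nat) : R := sum_f_R0 (fun j => w q j * phi j * y q n j) J.

Lemma ex_wphiy n : ex_series (fun j => w q j * phi j * y q n j).
Proof.
  eapply ex_series_ext.
  2: apply (ex_lin2 (hw q m) (- hw q m) _ _ (ex_wyy q hq0 hq1 m n) (ex_wyy q hq0 hq1 0 n)).
  intros j. simpl. unfold phi. rewrite y0 by auto. ring.
Qed.

Lemma finite_bound n J k :
  Rabs (lam q n * (Sp n (k + J) - Sp n J)) <= Cm * (U n (k + J) + 2 * T J n).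
Proof.
  unfold Sp. rewrite Rmult_minus_distr_l, !SBP_gen.
  replace ((1 - q) * (phi (k + J) * G q n (k + J) - psum (fun j => G q n j * (phi (S j) - phi j)) (k + J)) -
    (1 - q) * (phi J * G q n J - psum (fun j => G q n j * (phi (S j) - phi j)) J))
    with ((1 - q) * (phi (k + J) * G q n (k + J) - phi J * G q n J -
      (psum (fun j => G q n j * (phi (S j) - phi j)) (k + J) - psum (fun j => G q n j * (phi (S j) - phi j)) J))) by ring.
  rewrite psum_shift.
  rewrite Rabs_mult, (Rabs_right (1 - q)) by lra.
  assert (Hgen : forall j, Rabs (phi j * G q n j) <= Cm * U n j).
  { intros j. rewrite Rabs_mult. unfold U. pose proof (phi_bound j). pose proof (G_bound2 q hq0 hq1 n j).
    pose proof (Rabs_pos (phi j)). pose proof (Rabs_pos (G q n j)).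
    rewrite <- Rmult_assoc. apply Rmult_le_compat; auto. }
  assert (Hgen2 : forall j, Rabs (G q n j * (phi (S j) - phi j)) <= Cm * U n j).
  { intros j. rewrite Rabs_mult. unfold U. pose proof (phi_diff j). pose proof (G_bound2 q hq0 hq1 n j).
    pose proof (Rabs_pos (phi (S j) - phi j)). pose proof (Rabs_pos (G q n j)).
    rewrite <- Rmult_assoc, Rmult_comm. apply Rmult_le_compat; auto. }
  assert (H3 : Rabs (psum (fun i => G q n (i + J) * (phi (S (i + J)) - phi (i + J))) k) <= Cm * T J n).
  { eapply Rle_trans; [apply psum_abs|].
    apply (Rle_trans _ (psum (fun i => Cm * U n (i + J)) k)).
    - apply psum_le. intros i. apply Hgen2.
    - replace (psum (fun i => Cm * U n (i + J)) k) with (Cm * psum (fun i => U n (i + J)) k)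
        by (clear; induction k; simpl; [ring|rewrite <- IHk; ring]).
      apply Rmult_le_compat_l. apply Cm_nonneg. apply psum_le_Series. apply ex_U. intros; apply U_nonneg. }
  assert (H4 : U n J <= T J n).
  { unfold T. apply (term_le_Series (fun i => U n (i + J)) 0). apply ex_U. intros; apply U_nonneg. }
  pose proof (Hgen (k + J)%nat). pose proof (Hgen J). pose proof Cm_nonneg.
  apply (Rle_trans _ (1 * (Cm * U n (k + J) + Cm * U n J + Cm * T J n))).
  - apply Rmult_le_compat; try lra. apply Rabs_pos.
    eapply Rle_trans; [apply Rabs_sub_le|]. apply Rplus_le_compat; auto.
    eapply Rle_trans; [apply Rabs_sub_le|]. lra.
  - nra.
Qed.

Lemma limit_bound n J :
  Rabs (lam q n * (Series (fun j => w q j * phi j * y q n j) - Sp n J)) <= 2 * Cm * T J n.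
Proof.
  set (Ser := Series (fun j => w q j * phi j * y q n j)).
  assert (H1 : is_lim_seq (fun k => Sp n (k + J)) Ser).
  { apply (is_lim_seq_incr_n (fun K => Sp n K) J Ser). apply ser_lim. apply ex_wphiy. }
  assert (H2 : is_lim_seq (fun k => Rabs (lam q n * (Sp n (k + J) - Sp n J))) (Rabs (lam q n * (Ser - Sp n J)))).
  { apply (is_lim_seq_abs _ (lam q n * (Ser - Sp n J))).
    apply (is_lim_seq_scal_l _ (lam q n) (Ser - Sp n J)).
    apply is_lim_seq_minus'; auto. apply is_lim_seq_const. }
  assert (H3 : is_lim_seq (fun k => Cm * (2 * Bn q n * q ^ k + 2 * T J n)) (Cm * (2 * Bn q n * 0 + 2 * T J n))).
  { apply (is_lim_seq_scal_l _ Cm (2 * Bn q n * 0 + 2 * T J n)).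
    apply is_lim_seq_plus'; [|apply is_lim_seq_const].
    apply (is_lim_seq_scal_l _ (2 * Bn q n) 0). apply is_lim_seq_geom. rewrite Rabs_right; lra. }
  assert (H4 : forall k, Rabs (lam q n * (Sp n (k + J) - Sp n J)) <= Cm * (2 * Bn q n * q ^ k + 2 * T J n)).
  { intros k. eapply Rle_trans; [apply finite_bound|]. apply Rmult_le_compat_l; [apply Cm_nonneg|].
    apply Rplus_le_compat_r. eapply Rle_trans; [apply U_bound|]. rewrite pow_add.
    pose proof (pow_le1 q hq0 hq1 J). pose proof (pow_pos' q hq0 k). pose proof (pow_pos' q hq0 J).
    pose proof (Bn_nonneg q n). assert (q ^ k * q ^ J <= q ^ k) by nra. nra. }
  pose proof (is_lim_seq_le _ _ _ _ H4 H2 H3) as H. simpl in H.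
  replace (2 * Cm * T J n) with (Cm * (2 * Bn q n * 0 + 2 * T J n)) by ring. exact H.
Qed.

End Phi.
End H.


Lemma sqrt_pow x n : 0 <= x -> sqrt (x ^ n) = sqrt x ^ n.
Proof.
  intros Hx. induction n. simpl. apply sqrt_1.
  simpl. rewrite sqrt_mult; auto. rewrite IHn. auto. apply pow_le; auto.
Qed.

Section H2.
Variable q : R.
Hypothesis hq0 : 0 < q.
Hypothesis hq1 : q < 1.

Definition sq : R := sqrt q.

Lemma sq_props : 0 < sq /\ sq < 1 /\ sq * sq = q /\ q <= sq.
Proof.
  unfold sq. assert (0 < sqrt q) by (apply sqrt_lt_R0; auto).
  assert (sqrt q * sqrt q = q) by (apply sqrt_sqrt; lra).
  repeat split; auto; nra.
Qed.

Definition K4 : R := K0 q * (1 + / sq) / sqrt (1 - q).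

Lemma qj_isq j : q ^ j * isq q j = sq ^ j / sqrt (1 - q).
Proof.
  destruct sq_props as [H1 [H2 [H3 H4]]].
  unfold isq, w. rewrite sqrt_mult by (lra || (apply pow_le; lra)).
  rewrite sqrt_pow by lra. fold sq.
  assert (0 < sqrt (1 - q)) by (apply sqrt_lt_R0; lra).
  assert (0 < sq ^ j) by (apply pow_lt; lra).
  replace (q ^ j) with (sq ^ j * sq ^ j) by (rewrite <- Rpow_mult_distr, H3; reflexivity). field. nz.
Qed.

Lemma hlU_bound j M : sum_f_R0 (fun n => hl q n * U q n j) M <= K4 * sq ^ j.
Proof.
  destruct sq_props as [H1 [H2 [H3 H4]]].
  replace (sum_f_R0 (fun n => hl q n * U q n j) M) with
    (q ^ j * (sum_f_R0 (fun n => hl q n * Rabs (y q n (S j))) M + sum_f_R0 (fun n => hl q n * Rabs (y q n j)) M)).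
  2: { rewrite <- plus_sum, <- sum_scal_l. apply sum_eq. intros. unfold U. ring. }
  pose proof (key q hq0 hq1 (S j) M). pose proof (key q hq0 hq1 j M).
  pose proof (pow_pos' q hq0 j).
  apply (Rle_trans _ (q ^ j * (K0 q / sqrt (w q (S j)) + K0 q / sqrt (w q j)))).
  { apply Rmult_le_compat_l; lra. }
  unfold Rdiv. rewrite Rmult_plus_distr_l.
  assert (0 < sqrt (w q (S j))) by (apply sqrt_lt_R0, w_pos; auto).
  replace (q ^ j * (K0 q * / sqrt (w q (S j)))) with (K0 q * / q * (q ^ S j * isq q (S j))) by (unfold isq; simpl pow; field; nz).
  replace (q ^ j * (K0 q * / sqrt (w q j))) with (K0 q * (q ^ j * isq q j)) by (unfold isq; ring).
  rewrite !qj_isq. unfold K4.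
  assert (0 < sqrt (1 - q)) by (apply sqrt_lt_R0; lra).
  right. replace (/ q) with (/ (sq * sq)) by (rewrite H3; reflexivity). simpl pow. field. nz.
Qed.

Lemma K0_pos : 0 < K0 q.
Proof. unfold K0. assert (0 < / (1 - q) ^ 6) by (apply Rinv_0_lt_compat, pow_lt; lra). lra. Qed.

Lemma K4_pos : 0 < K4.
Proof.
  destruct sq_props as [H1 [H2 [H3 H4]]]. pose proof K0_pos.
  unfold K4. assert (0 < sqrt (1 - q)) by (apply sqrt_lt_R0; lra).
  apply Rdiv_lt_0_compat; auto. apply Rmult_lt_0_compat; auto.
  assert (0 < / sq) by (apply Rinv_0_lt_compat; auto). lra.
Qed.

Lemma sum_hlT J M : sum_f_R0 (fun n => hl q n * T q J n) M <= K4 * sq ^ J / (1 - sq).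
Proof.
  destruct sq_props as [H1 [H2 [H3 H4]]].
  destruct (SeriesSum (fun n i => hl q n * U q n (i + J)) M) as [Hex HS].
  { intros n. apply (ex_series_scal_l (hl q n) (fun i => U q n (i + J))). apply ex_U; auto. }
  replace (sum_f_R0 (fun n => hl q n * T q J n) M) with (sum_f_R0 (fun n => Series (fun i => hl q n * U q n (i + J))) M).
  2: { apply sum_eq. intros. unfold T. rewrite Series_scal_l. reflexivity. }
  rewrite <- HS.
  apply (Rle_trans _ (Series (fun i => K4 * sq ^ J * sq ^ i))).
  - apply Series_le.
    + intros i. split.
      * apply cond_pos_sum. intros n. apply Rmult_le_pos; [|apply U_nonneg; auto].
        destruct n; simpl; [lra|]. destruct (hw_lam_bounds q hq0 hq1 (S n) ltac:(lia)) as [Hl _].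
        apply Rlt_le, Rdiv_lt_0_compat; auto. apply hw_pos; auto.
      * eapply Rle_trans; [apply hlU_bound|]. rewrite pow_add. right; ring.
    + apply (ex_series_scal_l (K4 * sq ^ J) (fun i => sq ^ i)). apply ex_series_geom. rewrite Rabs_right; lra.
  - rewrite Series_scal_l, Series_geom by (rewrite Rabs_right; lra). right. field. lra.
Qed.

Section Phi2.
Variable m : nat.

Definition Err (J n : nat) : R := Series (fun j => w q j * phi q m j * y q n j) - Sp q m n J.

Lemma Err0_bound J : Rabs (Err J 0) <= Cm q m * q ^ S J / (1 - q).
Proof.
  set (a := fun j => w q j * phi q m j * y q 0 j).
  assert (Ha : forall j, Rabs (a j) <= Cm q m * q ^ j).
  { intros j. unfold a. rewrite y0 by auto. rewrite Rmult_1_r, Rabs_mult.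
    unfold w. rewrite Rabs_right by (apply Rle_ge, Rmult_le_pos; [lra|apply pow_le; lra]).
    pose proof (phi_bound q hq0 hq1 m j). pose proof (pow_pos' q hq0 j). pose proof (pow_le1 q hq0 hq1 j).
    pose proof (Cm_nonneg q hq0 hq1 m). pose proof (Rabs_pos (phi q m j)).
    apply (Rle_trans _ (1 * Rabs (phi q m j))); [|nra]. apply Rmult_le_compat_r; auto. nra. }
  assert (Hex : ex_series a) by (apply ex_wphiy; auto).
  unfold Err, Sp. fold a.
  rewrite (Series_incr_n a (S J)) by (auto; lia). simpl pred.
  replace (sum_f_R0 a J + Series (fun k => a (S J + k)%nat) - sum_f_R0 a J) with (Series (fun k => a (S J + k)%nat)) by ring.
  assert (Hex2 : ex_series (fun k => Rabs (a (S J + k)%nat))).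
  { apply (ex_series_bnd q _ (Cm q m * q ^ S J)); [lra|]. intros k. rewrite Rabs_Rabsolu.
    eapply Rle_trans; [apply Ha|]. rewrite pow_add. right; ring. }
  eapply Rle_trans; [apply Series_Rabs; auto|].
  apply (Rle_trans _ (Series (fun k => Cm q m * q ^ S J * q ^ k))).
  - apply Series_le. intros k. split. apply Rabs_pos. eapply Rle_trans; [apply Ha|]. rewrite pow_add. right; ring.
    apply (ex_series_scal_l (Cm q m * q ^ S J) (fun k => q ^ k)). apply ex_series_geom. rewrite Rabs_right; lra.
  - rewrite Series_scal_l, Series_geom by (rewrite Rabs_right; lra). right. field. lra.
Qed.

Lemma Err_term J n : Rabs (Err J n) * hw q n <=
  (if Nat.eq_dec n 0 then Rabs (Err J 0) else 0) + 2 * Cm q m * (hl q n * T q J n).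
Proof.
  destruct n as [|n].
  - rewrite hw0 by auto. destruct (Nat.eq_dec 0 0); [|lia]. cbn [hl]. lra.
  - destruct (Nat.eq_dec (S n) 0); [lia|].
    destruct (hw_lam_bounds q hq0 hq1 (S n) ltac:(lia)) as [Hl _].
    pose proof (limit_bound q hq0 hq1 m (S n) J) as Hb. fold (Err J (S n)) in Hb.
    unfold hl. pose proof (hw_pos q hq0 hq1 (S n)).
    rewrite Rabs_mult, (Rabs_right (lam q (S n))) in Hb by lra.
    replace (Rabs (Err J (S n)) * hw q (S n)) with (hw q (S n) / lam q (S n) * (lam q (S n) * Rabs (Err J (S n)))) by (field; lra).
    apply (Rle_trans _ (hw q (S n) / lam q (S n) * (2 * Cm q m * T q J (S n)))).
    + apply Rmult_le_compat_l; auto. left; apply Rdiv_lt_0_compat; lra.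
    + right; ring.
Qed.

Definition Kfin : R := Cm q m / (1 - q) + 2 * Cm q m * K4 / (1 - sq).

Lemma Err_l1 J M : sum_f_R0 (fun n => Rabs (Err J n) * hw q n) M <= Kfin * sq ^ J.
Proof.
  destruct sq_props as [H1 [H2 [H3 H4]]].
  apply (Rle_trans _ (sum_f_R0 (fun n => (if Nat.eq_dec n 0 then Rabs (Err J 0) else 0) + 2 * Cm q m * (hl q n * T q J n)) M)).
  { apply sum_Rle. intros. apply Err_term. }
  rewrite plus_sum, sum_scal_l.
  rewrite (sum_single _ _ 0).
  2: { intros k Hk. destruct (Nat.eq_dec k 0); [lia|auto]. }
  destruct (Compare_dec.le_dec 0 M); [|lia]. simpl.
  pose proof (Err0_bound J). pose proof (sum_hlT J M). pose proof (Cm_nonneg q hq0 hq1 m).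
  assert (q ^ S J <= sq ^ J).
  { assert (q ^ J <= sq ^ J) by (apply pow_incr; lra).
    pose proof (pow_pos' q hq0 J). simpl. nra. }
  unfold Kfin.
  apply (Rle_trans _ (Cm q m * sq ^ J / (1 - q) + 2 * Cm q m * (K4 * sq ^ J / (1 - sq)))).
  - apply Rplus_le_compat.
    + eapply Rle_trans; [exact H|]. unfold Rdiv. apply Rmult_le_compat_r. left; apply Rinv_0_lt_compat; lra.
      apply Rmult_le_compat_l; auto.
    + apply Rmult_le_compat_l; auto. nra.
  - right. field. nz.
Qed.

End Phi2.
End H2.


Lemma sum_n_m_RtoC (a : nat -> R) lo hi :
  @sum_n_m C_AbelianMonoid (fun i => RtoC (a i)) lo hi = RtoC (@sum_n_m R_AbelianMonoid a lo hi).
Proof.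
  destruct (Compare_dec.le_lt_dec lo hi) as [Hle|Hlt].
  - replace hi with (lo + (hi - lo))%nat by lia. generalize (hi - lo)%nat. intros k.
    induction k.
    + rewrite Nat.add_0_r, !sum_n_n. reflexivity.
    + replace (lo + S k)%nat with (S (lo + k)) by lia.
      rewrite !sum_n_Sm by lia. rewrite IHk. simpl. rewrite <- RtoC_plus. reflexivity.
  - rewrite !sum_n_m_zero by auto. reflexivity.
Qed.

Lemma sum_n_m_zero_prefix (a : nat -> R) lo hi : (lo <= S hi)%nat -> (forall i, (i < lo)%nat -> a i = 0) ->
  @sum_n_m R_AbelianMonoid a lo hi = sum_f_R0 a hi.
Proof.
  intros H1 H2. destruct lo.
  - rewrite <- sum_n_Reals. reflexivity.
  - rewrite <- sum_n_Reals. unfold sum_n. rewrite (sum_n_m_Chasles a 0 lo hi) by lia.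
    replace (sum_n_m a 0 lo) with (@zero R_AbelianMonoid).
    + rewrite plus_zero_l. reflexivity.
    + change (sum_n_m a 0 lo) with (sum_n a lo). rewrite sum_n_Reals. symmetry. apply sum_zero_ext. intros; apply H2; lia.
Qed.

Section I.
Variable q : R.
Hypothesis hq0 : 0 < q.
Hypothesis hq1 : q < 1.

Lemma Tshift_char k n x :
  @sum_n_m R_AbelianMonoid (fun i => gcoef q k n i * Rleg q i x) (Nat.max k n - Nat.min k n) (k + n)
  = Rleg q k x * Rleg q n x.
Proof.
  rewrite sum_n_m_zero_prefix by (first [lia | intros i Hi; rewrite (lin_vanish q hq0 hq1 k n (gcoef q k n) i (gcoef_spec q hq0 hq1 k n)); [ring|lia]]).
  destruct (gcoef_spec q hq0 hq1 k n) as [_ H]. rewrite H. reflexivity.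
Qed.

Lemma Tshift_real n (v : nat -> R) k :
  Tshift q n (fun i => RtoC (v i)) k =
  RtoC (@sum_n_m R_AbelianMonoid (fun i => gcoef q k n i * v i) (Nat.max k n - Nat.min k n) (k + n)).
Proof.
  unfold Tshift. rewrite <- sum_n_m_RtoC.
  apply sum_n_m_ext. intros. rewrite RtoC_mult. reflexivity.
Qed.

End I.


Lemma CSeries_RtoC (r : nat -> R) : CSeries (fun k => RtoC (r k)) = RtoC (Series r).
Proof. unfold CSeries, RtoC. simpl. f_equal. apply Series_zero. Qed.

Lemma is_series_single (r : nat -> R) : (forall k, k <> 0%nat -> r k = 0) -> is_series r (r 0%nat).
Proof.
  intros H. apply lim_of_sums. eapply is_lim_seq_ext; [|apply is_lim_seq_const].
  intros N. simpl. rewrite (sum_single _ _ 0); auto.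
Qed.

Lemma Series_single (r : nat -> R) : (forall k, k <> 0%nat -> r k = 0) -> Series r = r 0%nat.
Proof. intros H. apply is_series_unique, is_series_single; auto. Qed.

Lemma ex_series_single (r : nat -> R) : (forall k, k <> 0%nat -> r k = 0) -> ex_series r.
Proof. intros H. exists (r 0%nat). apply is_series_single; auto. Qed.

Lemma CSeries_ext (u v : nat -> C) : (forall k, u k = v k) -> CSeries u = CSeries v.
Proof. intros H. unfold CSeries. f_equal; apply Series_ext; intros; rewrite H; auto. Qed.

Lemma sum_n_m_ext_R (a b : nat -> R) lo hi : (forall i, a i = b i) ->
  @sum_n_m R_AbelianMonoid a lo hi = @sum_n_m R_AbelianMonoid b lo hi.
Proof. intros H. apply sum_n_m_ext. exact H. Qed.

Section J.
Variable q : R.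
Hypothesis hq0 : 0 < q.
Hypothesis hq1 : q < 1.

Lemma Tshift_char' k n j c :
  @sum_n_m R_AbelianMonoid (fun i => gcoef q k n i * (c * y q i j)) (Nat.max k n - Nat.min k n) (k + n)
  = c * (y q k j * y q n j).
Proof.
  rewrite sum_n_m_zero_prefix by (first [lia | intros i Hi; rewrite (lin_vanish q hq0 hq1 k n (gcoef q k n) i (gcoef_spec q hq0 hq1 k n)); [ring|lia]]).
  rewrite (sum_eq _ (fun i => c * (gcoef q k n i * Rleg q i (1 - q ^ j)))) by (intros; rewrite y_Rleg by auto; ring).
  rewrite sum_scal_l. destruct (gcoef_spec q hq0 hq1 k n) as [_ H]. rewrite <- H, !y_Rleg by auto. reflexivity.
Qed.

Definition Sj (j : nat) : R := Series (fun k => hw q k * y q k j ^ 2).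

Lemma Sj_props j : ex_series (fun k => hw q k * y q k j ^ 2) /\ 1 <= Sj j.
Proof.
  assert (Hp : forall k, 0 <= hw q k * y q k j ^ 2).
  { intros k. apply Rmult_le_pos; [left; apply hw_pos; auto|apply pow2_ge_0]. }
  destruct (Series_le_bound _ (/ w q j) Hp (bessel q hq0 hq1 j)) as [Hex _].
  split; auto.
  unfold Sj. eapply Rle_trans; [|apply (term_le_Series _ 0); auto].
  cbv beta. rewrite hw0, y0 by auto. lra.
Qed.

Definition ej (j : nat) : nat -> C := fun n => RtoC (y q n j / Sj j).

Lemma ej_idem j : idempotent q (ej j).
Proof.
  destruct (Sj_props j) as [Hex HS].
  split.
  - unfold in_l1, ej. eapply ex_series_ext; [|apply (ex_series_scal_r (/ Sj j) _ (alpha_l1 q hq0 hq1 j))].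
    intros n. simpl. rewrite Cmod_R. unfold Rdiv. rewrite Rabs_mult, (Rabs_right (/ Sj j)).
    ring. apply Rle_ge; left; apply Rinv_0_lt_compat; lra.
  - intros n. unfold conv.
    rewrite (CSeries_ext _ (fun k => RtoC (y q n j / (Sj j) ^ 2 * (hw q k * y q k j ^ 2)))).
    + rewrite CSeries_RtoC, Series_scal_l. unfold ej. fold (Sj j). f_equal. field. lra.
    + intros k. unfold ej. rewrite Tshift_real.
      rewrite (sum_n_m_ext_R _ (fun i => gcoef q k n i * (/ Sj j * y q i j))) by (intros; unfold Rdiv; ring).
      rewrite Tshift_char'. rewrite <- !RtoC_mult. f_equal. field. lra.
Qed.

Definition d0 : nat -> C := fun n => RtoC (if Nat.eq_dec n 0 then 1 else 0).

Lemma d0_idem : idempotent q d0.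
Proof.
  split.
  - unfold in_l1. apply ex_series_single. intros k Hk. unfold d0. destruct (Nat.eq_dec k 0); [lia|].
    rewrite Cmod_R, Rabs_R0. ring.
  - intros n. unfold conv.
    rewrite (CSeries_ext _ (fun k => RtoC ((@sum_n_m R_AbelianMonoid (fun i => gcoef q k n i * (if Nat.eq_dec i 0 then 1 else 0)) (Nat.max k n - Nat.min k n) (k + n)) * (if Nat.eq_dec k 0 then 1 else 0) * hw q k))).
    2: { intros k. unfold d0. rewrite Tshift_real. rewrite <- !RtoC_mult. reflexivity. }
    rewrite CSeries_RtoC. rewrite Series_single.
    + simpl. rewrite hw0 by auto. rewrite Nat.sub_0_r, sum_n_n.
      rewrite gcoef_0nn by auto. unfold d0. f_equal. ring.
    + intros k Hk. destruct (Nat.eq_dec k 0); [lia|ring].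
Qed.

End J.


Lemma lincomb_app l1 l2 n : lincomb (l1 ++ l2) n = Cplus (lincomb l1 n) (lincomb l2 n).
Proof.
  induction l1 as [|p l1 IH]; simpl.
  - rewrite Cplus_0_l. reflexivity.
  - rewrite IH. ring.
Qed.

Lemma lincomb_map c l n : lincomb (map (fun p => (Cmult c (fst p), snd p)) l) n = Cmult c (lincomb l n).
Proof.
  induction l as [|p l IH]; simpl.
  - unfold RtoC. apply injective_projections; simpl; ring.
  - rewrite IH. ring.
Qed.

Lemma ex_series_ext_R (a b : nat -> R) : (forall n, a n = b n) -> ex_series a -> ex_series b.
Proof. apply ex_series_ext. Qed.

Section K.
Variable q : R.
Hypothesis hq0 : 0 < q.
Hypothesis hq1 : q < 1.

Lemma l1_ext f g : (forall n, f n = g n) -> (in_l1 q f -> in_l1 q g) /\ l1norm q f = l1norm q g.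
Proof.
  intros H. split.
  - unfold in_l1. apply ex_series_ext_R. intros; rewrite H; auto.
  - unfold l1norm. apply Series_ext. intros; rewrite H; auto.
Qed.

Lemma l1_nonneg f : in_l1 q f -> 0 <= l1norm q f.
Proof.
  intros H. apply Series_nonneg; auto. intros n. apply Rmult_le_pos. apply Cmod_ge_0. left; apply hw_pos; auto.
Qed.

Lemma l1_plus f g : in_l1 q f -> in_l1 q g ->
  in_l1 q (fun n => Cplus (f n) (g n)) /\ l1norm q (fun n => Cplus (f n) (g n)) <= l1norm q f + l1norm q g.
Proof.
  intros Hf Hg.
  assert (Hs : ex_series (fun n => Cmod (f n) * hw q n + Cmod (g n) * hw q n)).
  { apply (ex_series_plus (fun n => Cmod (f n) * hw q n) (fun n => Cmod (g n) * hw q n)); auto. }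
  assert (Hb : forall n, 0 <= Cmod (Cplus (f n) (g n)) * hw q n <= Cmod (f n) * hw q n + Cmod (g n) * hw q n).
  { intros n. pose proof (hw_pos q hq0 hq1 n). pose proof (Cmod_triangle (f n) (g n)). split.
    apply Rmult_le_pos. apply Cmod_ge_0. lra. nra. }
  assert (He : in_l1 q (fun n => Cplus (f n) (g n))).
  { unfold in_l1. apply (ex_series_le (fun n => Cmod (Cplus (f n) (g n)) * hw q n) (fun n => Cmod (f n) * hw q n + Cmod (g n) * hw q n)); auto.
    intros n. change (norm (Cmod (Cplus (f n) (g n)) * hw q n)) with (Rabs (Cmod (Cplus (f n) (g n)) * hw q n)).
    rewrite Rabs_right by (apply Rle_ge, Hb). apply Hb. }
  split; auto. unfold l1norm. rewrite <- Series_plus by auto. apply Series_le; auto.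
Qed.

Lemma l1_scal c f : in_l1 q f ->
  in_l1 q (fun n => Cmult c (f n)) /\ l1norm q (fun n => Cmult c (f n)) = Cmod c * l1norm q f.
Proof.
  intros Hf. split.
  - unfold in_l1. apply (ex_series_ext_R (fun n => Cmod c * (Cmod (f n) * hw q n))).
    + intros n. rewrite Cmod_mult. ring.
    + apply (ex_series_scal_l (Cmod c) _ Hf).
  - unfold l1norm. rewrite <- Series_scal_l. apply Series_ext. intros. rewrite Cmod_mult. ring.
Qed.

Definition Approx (f : nat -> C) : Prop := forall eps, 0 < eps -> exists l : list (C * (nat -> C)),
  List.Forall (fun p => idempotent q (snd p)) l /\
  in_l1 q (fun n => Cminus (f n) (lincomb l n)) /\
  l1norm q (fun n => Cminus (f n) (lincomb l n)) < eps.

Lemma Approx_ext f g : (forall n, f n = g n) -> Approx f -> Approx g.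
Proof.
  intros H Hf eps Heps. destruct (Hf eps Heps) as [l [H1 [H2 H3]]]. exists l. split; auto.
  destruct (l1_ext (fun n => Cminus (f n) (lincomb l n)) (fun n => Cminus (g n) (lincomb l n))) as [E1 E2].
  { intros; rewrite H; auto. }
  split; auto. rewrite <- E2; auto.
Qed.

Lemma Approx_plus f g : Approx f -> Approx g -> Approx (fun n => Cplus (f n) (g n)).
Proof.
  intros Hf Hg eps Heps.
  destruct (Hf (eps / 2) ltac:(lra)) as [l1 [A1 [B1 C1]]].
  destruct (Hg (eps / 2) ltac:(lra)) as [l2 [A2 [B2 C2]]].
  exists (l1 ++ l2). split. apply Forall_app; auto.
  destruct (l1_plus _ _ B1 B2) as [D1 D2].
  destruct (l1_ext (fun n => Cplus (Cminus (f n) (lincomb l1 n)) (Cminus (g n) (lincomb l2 n)))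
    (fun n => Cminus (Cplus (f n) (g n)) (lincomb (l1 ++ l2) n))) as [E1 E2].
  { intros n. rewrite lincomb_app. ring. }
  split; auto. rewrite <- E2. lra.
Qed.

Lemma Approx_scal c f : Approx f -> Approx (fun n => Cmult c (f n)).
Proof.
  intros Hf eps Heps.
  pose proof (Cmod_ge_0 c).
  destruct (Hf (eps / (Cmod c + 1))) as [l [A [B Cc]]].
  { apply Rdiv_lt_0_compat; lra. }
  exists (map (fun p => (Cmult c (fst p), snd p)) l). split.
  { apply Forall_map. eapply Forall_impl; [|exact A]. intros p Hp. exact Hp. }
  destruct (l1_scal c _ B) as [D1 D2].
  destruct (l1_ext (fun n => Cmult c (Cminus (f n) (lincomb l n)))
    (fun n => Cminus (Cmult c (f n)) (lincomb (map (fun p => (Cmult c (fst p), snd p)) l) n))) as [E1 E2].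
  { intros n. rewrite lincomb_map. ring. }
  split; auto. rewrite <- E2, D2.
  pose proof (l1_nonneg _ B).
  apply (Rle_lt_trans _ (Cmod c * (eps / (Cmod c + 1)))).
  - apply Rmult_le_compat_l; lra.
  - apply (Rmult_lt_reg_r (Cmod c + 1)); [lra|]. field_simplify; [|lra]. nra.
Qed.

Definition delta (m : nat) : nat -> C := fun n => RtoC (if Nat.eq_dec n m then 1 else 0).

Lemma Approx_delta0 : Approx (delta 0).
Proof.
  intros eps Heps. exists ((RtoC 1, d0) :: nil). split.
  { constructor; [apply d0_idem; auto|constructor]. }
  destruct (l1_ext (fun _ => RtoC 0) (fun n => Cminus (delta 0 n) (lincomb ((RtoC 1, d0) :: nil) n))) as [E1 E2].
  { intros n. unfold delta, d0. simpl. unfold RtoC, Cminus, Cplus, Cmult, Copp. simpl.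
    apply injective_projections; simpl; ring. }
  assert (Hz : in_l1 q (fun _ => RtoC 0)).
  { unfold in_l1. apply ex_series_single. intros. rewrite Cmod_R, Rabs_R0. ring. }
  split; auto.
  rewrite <- E2. unfold l1norm. rewrite (Series_ext _ (fun _ => 0)) by (intros; rewrite Cmod_R, Rabs_R0; ring).
  rewrite Series_zero. lra.
Qed.

End K.


Section K2.
Variable q : R.
Hypothesis hq0 : 0 < q.
Hypothesis hq1 : q < 1.

Lemma series_phi m n : (1 <= m)%nat ->
  Series (fun j => w q j * phi q m j * y q n j) =
  (if Nat.eq_dec n m then 1 else 0) - hw q m * (if Nat.eq_dec n 0 then 1 else 0).
Proof.
  intros Hm.
  rewrite (Series_ext _ (fun j => hw q m * (w q j * y q m j * y q n j) + (- hw q m) * (w q j * y q 0 j * y q n j))).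
  2: { intros j. unfold phi. rewrite y0 by auto. ring. }
  rewrite ser_lin2 by (apply ex_wyy; auto). fold (ip q m n) (ip q 0 n).
  rewrite !ip_eq by auto. pose proof (hw_pos q hq0 hq1 m).
  destruct (Nat.eq_dec m n), (Nat.eq_dec n m), (Nat.eq_dec 0 n), (Nat.eq_dec n 0); subst; try lia;
    first [ring | (field; lra) | (rewrite hw0 by auto; field; lra)].
Qed.

Fixpoint LJ (m J : nat) : list (C * (nat -> C)) :=
  match J with
  | O => (RtoC (w q 0 * phi q m 0 * Sj q 0), ej q 0) :: nil
  | S J' => (RtoC (w q (S J') * phi q m (S J') * Sj q (S J')), ej q (S J')) :: LJ m J'
  end.

Lemma LJ_term m j n : Cmult (RtoC (w q j * phi q m j * Sj q j)) (ej q j n) = RtoC (w q j * phi q m j * y q n j).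
Proof.
  unfold ej. rewrite <- RtoC_mult. f_equal. destruct (Sj_props q hq0 hq1 j) as [_ HS]. field. lra.
Qed.

Lemma lincomb_LJ m J n : lincomb (LJ m J) n = RtoC (Sp q m n J).
Proof.
  induction J.
  - simpl. rewrite LJ_term. unfold Sp. simpl. unfold RtoC, Cplus. simpl. apply injective_projections; simpl; ring.
  - change (lincomb (LJ m (S J)) n) with (Cplus (Cmult (RtoC (w q (S J) * phi q m (S J) * Sj q (S J))) (ej q (S J) n)) (lincomb (LJ m J) n)).
    rewrite LJ_term, IHJ. unfold Sp. rewrite tech5. rewrite RtoC_plus. ring.
Qed.

Lemma LJ_idem m J : List.Forall (fun p => idempotent q (snd p)) (LJ m J).
Proof.
  induction J; simpl; constructor; auto; apply ej_idem; auto.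
Qed.

Lemma Kfin_nonneg m : 0 <= Kfin q m.
Proof.
  unfold Kfin. destruct (sq_props q hq0 hq1) as [H1 [H2 _]].
  pose proof (Cm_nonneg q hq0 hq1 m). pose proof (K4_pos q hq0 hq1).
  assert (0 <= Cm q m / (1 - q)) by (apply Rdiv_le_0_compat; lra).
  assert (0 <= 2 * Cm q m * K4 q / (1 - sq q)) by (apply Rdiv_le_0_compat; [apply Rmult_le_pos; lra|lra]).
  lra.
Qed.

Lemma Approx_delta m : Approx q (delta m).
Proof.
  destruct m as [|m]. apply Approx_delta0; auto.
  set (m' := S m).
  intros eps Heps.
  pose proof (Kfin_nonneg m').
  destruct (sq_props q hq0 hq1) as [H1 [H2 _]].
  destruct (pow_lt_1_zero (sq q) ltac:(rewrite Rabs_right; lra) (eps / (Kfin q m' + 1)) ltac:(apply Rdiv_lt_0_compat; lra)) as [J HJ].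
  specialize (HJ J (le_n J)). rewrite Rabs_right in HJ by (apply Rle_ge, pow_le; lra).
  exists ((RtoC (hw q m'), d0) :: LJ m' J). split.
  { constructor. apply d0_idem; auto. apply LJ_idem. }
  destruct (l1_ext q (fun n => RtoC (Err q m' J n)) (fun n => Cminus (delta m' n) (lincomb ((RtoC (hw q m'), d0) :: LJ m' J) n))) as [E1 E2].
  { intros n. change (lincomb ((RtoC (hw q m'), d0) :: LJ m' J) n) with (Cplus (Cmult (RtoC (hw q m')) (d0 n)) (lincomb (LJ m' J) n)).
    rewrite lincomb_LJ. unfold Err. rewrite series_phi by (unfold m'; lia).
    unfold delta, d0. rewrite <- RtoC_mult, <- RtoC_plus, <- RtoC_minus. f_equal. ring. }
  assert (Hp : forall n, 0 <= Rabs (Err q m' J n) * hw q n).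
  { intros n. apply Rmult_le_pos. apply Rabs_pos. left; apply hw_pos; auto. }
  destruct (Series_le_bound _ _ Hp (Err_l1 q hq0 hq1 m' J)) as [Hex Hle].
  assert (Hin : in_l1 q (fun n => RtoC (Err q m' J n))).
  { unfold in_l1. apply (ex_series_ext_R (fun n => Rabs (Err q m' J n) * hw q n)); auto. intros; rewrite Cmod_R; auto. }
  split; auto.
  rewrite <- E2. unfold l1norm.
  rewrite (Series_ext _ (fun n => Rabs (Err q m' J n) * hw q n)) by (intros; rewrite Cmod_R; auto).
  eapply Rle_lt_trans; [exact Hle|].
  apply (Rle_lt_trans _ (Kfin q m' * (eps / (Kfin q m' + 1)))).
  - apply Rmult_le_compat_l; lra.
  - apply (Rmult_lt_reg_r (Kfin q m' + 1)); [lra|]. field_simplify; [|lra]. nra.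
Qed.

End K2.

Section K3.
Variable q : R.
Hypothesis hq0 : 0 < q.
Hypothesis hq1 : q < 1.

Definition trunc (f : nat -> C) (M : nat) : nat -> C :=
  fun n => if Compare_dec.le_dec n M then f n else RtoC 0.

Lemma Approx_trunc f M : Approx q (trunc f M).
Proof.
  induction M.
  - apply (Approx_ext q (fun n => Cmult (f 0%nat) (delta 0 n))).
    + intros n. unfold trunc, delta. destruct (Compare_dec.le_dec n 0), (Nat.eq_dec n 0); try lia.
      * subst. unfold RtoC, Cmult. simpl. apply injective_projections; simpl; ring.
      * unfold RtoC, Cmult. simpl. apply injective_projections; simpl; ring.
    + apply Approx_scal; auto. apply Approx_delta; auto.
  - apply (Approx_ext q (fun n => Cplus (trunc f M n) (Cmult (f (S M)) (delta (S M) n)))).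
    + intros n. unfold trunc, delta.
      destruct (Compare_dec.le_dec n M), (Compare_dec.le_dec n (S M)), (Nat.eq_dec n (S M)); try lia;
        try subst; unfold RtoC, Cmult, Cplus; simpl; apply injective_projections; simpl; ring.
    + apply Approx_plus; auto. apply Approx_scal; auto. apply Approx_delta; auto.
Qed.

Lemma Approx_all f : in_l1 q f -> Approx q f.
Proof.
  intros Hf eps Heps.
  set (a := fun n => Cmod (f n) * hw q n).
  assert (Ha : ex_series a) by exact Hf.
  assert (Hapos : forall n, 0 <= a n).
  { intros n. unfold a. apply Rmult_le_pos. apply Cmod_ge_0. left; apply hw_pos; auto. }
  pose proof (ser_lim a Ha) as Hlim. apply is_lim_seq_spec in Hlim.
  destruct (Hlim (mkposreal (eps / 2) ltac:(lra))) as [M HM]. specialize (HM M (le_n M)). simpl in HM.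
  destruct (Approx_trunc f M (eps / 2) ltac:(lra)) as [l [A1 [A2 A3]]].
  exists l. split; auto.
  set (g := fun n => if Compare_dec.le_dec n M then RtoC 0 else f n).
  set (b := fun n => if Compare_dec.le_dec n M then 0 else a n).
  assert (Hgb : forall n, Cmod (g n) * hw q n = b n).
  { intros n. unfold g, b. destruct (Compare_dec.le_dec n M). rewrite Cmod_R, Rabs_R0. ring. reflexivity. }
  assert (Hb : ex_series b).
  { apply (ex_series_le b a); auto. intros n. change (norm (b n)) with (Rabs (b n)). unfold b.
    destruct (Compare_dec.le_dec n M). rewrite Rabs_R0. auto. rewrite Rabs_right. lra. apply Rle_ge; auto. }
  assert (Hg : in_l1 q g).
  { unfold in_l1. apply (ex_series_ext_R b); [intros; rewrite Hgb; auto | auto]. }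
  assert (Hgn : l1norm q g < eps / 2).
  { unfold l1norm. rewrite (Series_ext _ b) by auto.
    rewrite (Series_incr_n b (S M)) by (auto; lia). simpl pred.
    rewrite sum_zero_ext by (intros k Hk; unfold b; destruct (Compare_dec.le_dec k M); [auto|lia]).
    rewrite (Series_ext _ (fun k => a (S M + k)%nat)).
    2: { intros k. unfold b. destruct (Compare_dec.le_dec (S M + k) M); [lia|auto]. }
    rewrite (Series_incr_n a (S M)) in HM by (auto; lia). simpl pred in HM.
    assert (0 <= Series (fun k => a (S M + k)%nat)).
    { apply Series_nonneg. apply (ex_series_incr_n a (S M)); auto. intros; apply Hapos. }
    rewrite Rabs_left1 in HM by lra. lra. }
  destruct (l1_plus q hq0 hq1 g _ Hg A2) as [B1 B2].
  destruct (l1_ext q (fun n => Cplus (g n) (Cminus (trunc f M n) (lincomb l n))) (fun n => Cminus (f n) (lincomb l n))) as [E1 E2].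
  { intros n. unfold g, trunc. destruct (Compare_dec.le_dec n M).
    - apply injective_projections; unfold Cminus, Cplus, Copp, RtoC; simpl; ring.
    - apply injective_projections; unfold Cminus, Cplus, Copp, RtoC; simpl; ring. }
  split; auto. rewrite <- E2. lra.
Qed.

End K3.

Theorem theorem3p1 (q : R) (hq0 : 0 < q) (hq1 : q < 1) :
  forall f : nat -> C, in_l1 q f ->
  forall eps : R, 0 < eps ->
  exists l : list (C * (nat -> C)),
    List.Forall (fun p => idempotent q (snd p)) l /\
    l1norm q (fun n => Cminus (f n) (lincomb l n)) < eps.
Proof.
  intros f Hf eps Heps.
  destruct (Approx_all q hq0 hq1 f Hf eps Heps) as [l [A [_ B]]].
  exists l. split; auto.
Qed.
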